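(* Let $G$ be an open localic groupoid. Then its associated quantale $\mathcal O(G)$, with the structure described in the context, is a groupoid quantale over the base locale $\mathcal O(G_0)$.
   Context: A localic groupoid $G$ has locales $G_0$ (objects), $G_1$ (arrows), maps $d,r:G_1\to G_0$, $u:G_0\to G_1$, $i:G_1\to G_1$, $m:G_2\to G_1$ where $G_2$ is the pullback of $r$ and $d$; it is open if $d$ is an open map of locales (then $m$ is open). $\mathcal O(G)$ is the frame $\mathcal O(G_1)$ with multiplication given by the composite $\mathcal O(G_1)\otimes\mathcal O(G_1)\to\mathcal O(G_2)\xrightarrow{m_!}\mathcal O(G_1)$, involution $q^*=i_!(q)=i^*(q)$, actions of $A=\mathcal O(G_0)$ given by $a\triangleright q=d^*(a)\wedge q$ and $q\triangleleft a=r^*(a)\wedge q$, support $\varsigma=d_!$ and $\upsilon=u^*$. Definitions: for a locale $A$, an $A$-$A$-bimodule is a sup-lattice $M$ with actions $a\triangleright m$, $m\triangleleft a$ preserving joins in each variable with $1_A\triangleright m=m$, $(a\wedge b)\triangleright m=a\triangleright(b\triangleright m)$, $m\triangleleft1_A=m$, $m\triangleleft(a\wedge b)=(m\triangleleft a)\triangleleft b$, $(a\triangleright m)\triangleleft b=a\triangleright(m\triangleleft b)$. An $A$-$A$-quantale is such a $Q$ with associative join-preserving multiplication and $(a\triangleright x)y=a\triangleright(xy)$, $(x\triangleleft a)y=x(a\triangleright y)$, $(xy)\triangleleft a=x(y\triangleleft a)$; involutive if there is a join-preserving $x\mapsto x^*$ with $x^{**}=x$, $(xy)^*=y^*x^*$,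 $(a\triangleright(x\triangleleft b))^*=b\triangleright(x^*\triangleleft a)$. $1_Q$ is the top. A support is a join-preserving $\varsigma:Q\to A$ with $\varsigma(1_Q)=1_A$, $\varsigma(x)\triangleright y\le xx^*y$, $\varsigma(x)\triangleright x=x$; equivariant if $\varsigma(a\triangleright x)=a\wedge\varsigma(x)$. A based quantal frame is an involutive $A$-$A$-quantale that is a frame with $(a\triangleright x)\wedge y=a\triangleright(x\wedge y)$, $(x\triangleleft a)\wedge y=(x\wedge y)\triangleleft a$; reflexive means a frame homomorphism $\upsilon:Q\to A$ with $\upsilon(a\triangleright1_Q)=a=\upsilon(1_Q\triangleleft a)$. $Q\otimes_AQ$ is $Q\otimes Q$ modulo $x\otimes(a\triangleright y)=(x\triangleleft a)\otimes y$, $\mu_A:Q\otimes_AQ\to Q$ the induced multiplication; multiplicative means the right adjoint of $\mu_A$ preserves joins. Unit laws: $\bigvee_{xy\le a}\upsilon(x)\triangleright y=a$ for all $a$; inverse law: $\upsilon(a)\triangleright1_Q=\bigvee_{xy^*\le a}x\wedge y$ for all $a$. A groupoid quantale is a multiplicative, equivariantly supported, reflexive based quantal frame satisfying the unit laws and the inverse law. *)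

(* Defs.v *)
Definition img {X Y : Type} (f : X -> Y) (S : X -> Prop) : Y -> Prop :=
  fun y => exists x, S x /\ y = f x.

Record Frame := {
  fcar :> Type;
  fle : fcar -> fcar -> Prop;
  fsup : (fcar -> Prop) -> fcar;
  fmeet : fcar -> fcar -> fcar;
  ftop : fcar;
  fle_refl : forall x, fle x x;
  fle_trans : forall x y z, fle x y -> fle y z -> fle x z;
  fle_antisym : forall x y, fle x y -> fle y x -> x = y;
  fsup_ub : forall S x, S x -> fle x (fsup S);
  fsup_lub : forall S y, (forall x, S x -> fle x y) -> fle (fsup S) y;
  fmeet_lb1 : forall x y, fle (fmeet x y) x;
  fmeet_lb2 : forall x y, fle (fmeet x y) y;
  fmeet_glb : forall x y z, fle z x -> fle z y -> fle z (fmeet x y);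
  ftop_max : forall x, fle x ftop;
  fdistr : forall x S, fmeet x (fsup S) = fsup (img (fmeet x) S)
}.

Arguments fle {f} _ _.
Arguments fsup {f} _.
Arguments fmeet {f} _ _.
Arguments ftop {f}.

Definition finf {F : Frame} (S : F -> Prop) : F :=
  fsup (fun z => forall s, S s -> fle z s).

Definition frame_hom {A B : Frame} (f : A -> B) : Prop :=
  f ftop = ftop /\
  (forall x y, f (fmeet x y) = fmeet (f x) (f y)) /\
  (forall S, f (fsup S) = fsup (img f S)).

(* A locale map f : X -> Y is given by its inverse image f^* : O(Y) -> O(X).
   Its direct image f_! is the left adjoint of f^* (the formula below is the
   left adjoint whenever one exists). *)
Definition left_adj {A B : Frame} (fstar : A -> B) (x : B) : A :=
  finf (fun y => fle x (fstar y)).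

Definition open_map {A B : Frame} (fstar : A -> B) : Prop :=
  (forall x y, fle (left_adj fstar x) y <-> fle x (fstar y)) /\
  (forall x y, left_adj fstar (fmeet x (fstar y)) = fmeet (left_adj fstar x) y).

(* P (with p1, p2) is the pushout of frames of f and g, i.e. the locale P is
   the pullback of the locale maps corresponding to f and g. *)
Definition is_pushout {X Y Z P : Frame} (f : X -> Y) (g : X -> Z)
    (p1 : Y -> P) (p2 : Z -> P) : Prop :=
  frame_hom p1 /\ frame_hom p2 /\ (forall x, p1 (f x) = p2 (g x)) /\
  forall (F : Frame) (h1 : Y -> F) (h2 : Z -> F),
    frame_hom h1 -> frame_hom h2 -> (forall x, h1 (f x) = h2 (g x)) ->
    exists h : P -> F, frame_hom h /\ (forall y, h (p1 y) = h1 y) /\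
      (forall z, h (p2 z) = h2 z) /\
      forall h' : P -> F, frame_hom h' -> (forall y, h' (p1 y) = h1 y) ->
        (forall z, h' (p2 z) = h2 z) -> forall w, h' w = h w.

(* Data of a localic groupoid, given by the inverse-image frame homs.
   G2 is the pullback of r and d with projections pi1, pi2 (pi1 = first
   arrow, pi2 = second arrow, r pi1 = d pi2).  *)
Record LGData := {
  G0 : Frame; G1 : Frame; G2 : Frame;
  dst : G0 -> G1;
  rst : G0 -> G1;
  ust : G1 -> G0;
  ist : G1 -> G1;
  mst : G1 -> G2;
  pi1 : G1 -> G2;
  pi2 : G1 -> G2
}.

Definition is_localic_groupoid (G : LGData) : Prop :=
  frame_hom (dst G) /\ frame_hom (rst G) /\ frame_hom (ust G) /\
  frame_hom (ist G) /\ frame_hom (mst G) /\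
  is_pushout (rst G) (dst G) (pi1 G) (pi2 G) /\
  (forall a, ust G (dst G a) = a) /\ (forall a, ust G (rst G a) = a) /\
  (forall a, mst G (dst G a) = pi1 G (dst G a)) /\
  (forall a, mst G (rst G a) = pi2 G (rst G a)) /\
  (forall a, ist G (dst G a) = rst G a) /\ (forall a, ist G (rst G a) = dst G a) /\
  (* unit laws: m <u d, 1> = 1 and m <1, u r> = 1 *)
  (forall h : G2 G -> G1 G, frame_hom h ->
     (forall x, h (pi1 G x) = dst G (ust G x)) -> (forall x, h (pi2 G x) = x) ->
     forall x, h (mst G x) = x) /\
  (forall h : G2 G -> G1 G, frame_hom h ->
     (forall x, h (pi1 G x) = x) -> (forall x, h (pi2 G x) = rst G (ust G x)) ->
     forall x, h (mst G x) = x) /\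
  (* inverse laws: m <1, i> = u d and m <i, 1> = u r *)
  (forall h : G2 G -> G1 G, frame_hom h ->
     (forall x, h (pi1 G x) = x) -> (forall x, h (pi2 G x) = ist G x) ->
     forall x, h (mst G x) = dst G (ust G x)) /\
  (forall h : G2 G -> G1 G, frame_hom h ->
     (forall x, h (pi1 G x) = ist G x) -> (forall x, h (pi2 G x) = x) ->
     forall x, h (mst G x) = rst G (ust G x)) /\
  (* associativity, on generalized elements (equivalently, on G3) *)
  (forall (F : Frame) (g1 g2 g3 : G1 G -> F),
     frame_hom g1 -> frame_hom g2 -> frame_hom g3 ->
     (forall a, g1 (rst G a) = g2 (dst G a)) ->
     (forall a, g2 (rst G a) = g3 (dst G a)) ->
     forall h12 h23 k l : G2 G -> F,
       frame_hom h12 -> frame_hom h23 -> frame_hom k -> frame_hom l ->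
       (forall x, h12 (pi1 G x) = g1 x) -> (forall x, h12 (pi2 G x) = g2 x) ->
       (forall x, h23 (pi1 G x) = g2 x) -> (forall x, h23 (pi2 G x) = g3 x) ->
       (forall x, k (pi1 G x) = h12 (mst G x)) -> (forall x, k (pi2 G x) = g3 x) ->
       (forall x, l (pi1 G x) = g1 x) -> (forall x, l (pi2 G x) = h23 (mst G x)) ->
       forall x, k (mst G x) = l (mst G x)).

Definition open_groupoid (G : LGData) : Prop :=
  is_localic_groupoid G /\ open_map (dst G).

Definition OG_mul (G : LGData) (x y : G1 G) : G1 G :=
  left_adj (mst G) (fmeet (pi1 G x) (pi2 G y)).
Definition OG_inv (G : LGData) (x : G1 G) : G1 G := ist G x.
Definition OG_actL (G : LGData) (a : G0 G) (q : G1 G) : G1 G := fmeet (dst G a) q.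
Definition OG_actR (G : LGData) (q : G1 G) (a : G0 G) : G1 G := fmeet (rst G a) q.
Definition OG_supp (G : LGData) (q : G1 G) : G0 G := left_adj (dst G) q.
Definition OG_ups (G : LGData) (q : G1 G) : G0 G := ust G q.

Section GQ.
Variables (A Q : Frame)
  (mul : Q -> Q -> Q) (inv : Q -> Q)
  (actL : A -> Q -> Q) (actR : Q -> A -> Q)
  (supp : Q -> A) (ups : Q -> A).

Definition is_bimodule : Prop :=
  (forall a S, actL a (fsup S) = fsup (img (actL a) S)) /\
  (forall S q, actL (fsup S) q = fsup (img (fun a => actL a q) S)) /\
  (forall q S, actR q (fsup S) = fsup (img (actR q) S)) /\
  (forall S a, actR (fsup S) a = fsup (img (fun q => actR q a) S)) /\
  (forall m, actL ftop m = m) /\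
  (forall a b m, actL (fmeet a b) m = actL a (actL b m)) /\
  (forall m, actR m ftop = m) /\
  (forall a b m, actR m (fmeet a b) = actR (actR m a) b) /\
  (forall a b m, actR (actL a m) b = actL a (actR m b)).

Definition is_AA_quantale : Prop :=
  is_bimodule /\
  (forall x y z, mul (mul x y) z = mul x (mul y z)) /\
  (forall S y, mul (fsup S) y = fsup (img (fun x => mul x y) S)) /\
  (forall x S, mul x (fsup S) = fsup (img (mul x) S)) /\
  (forall a x y, mul (actL a x) y = actL a (mul x y)) /\
  (forall a x y, mul (actR x a) y = mul x (actL a y)) /\
  (forall a x y, actR (mul x y) a = mul x (actR y a)).

Definition is_involutive : Prop :=
  (forall S, inv (fsup S) = fsup (img inv S)) /\
  (forall x, inv (inv x) = x) /\
  (forall x y, inv (mul x y) = mul (inv y) (inv x)) /\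
  (forall a b x, inv (actL a (actR x b)) = actL b (actR (inv x) a)).

Definition is_support : Prop :=
  (forall S, supp (fsup S) = fsup (img supp S)) /\
  supp ftop = ftop /\
  (forall x y, fle (actL (supp x) y) (mul (mul x (inv x)) y)) /\
  (forall x, actL (supp x) x = x).

Definition is_equivariant_support : Prop :=
  is_support /\ forall a x, supp (actL a x) = fmeet a (supp x).

(* Q is a frame by construction (Q : Frame) *)
Definition is_based_quantal_frame : Prop :=
  is_AA_quantale /\ is_involutive /\
  (forall a x y, fmeet (actL a x) y = actL a (fmeet x y)) /\
  (forall a x y, fmeet (actR x a) y = actR (fmeet x y) a).

Definition is_reflexive : Prop :=
  frame_hom ups /\ forall a, ups (actL a ftop) = a /\ ups (actR ftop a) = a.

(* Q (x)_A Q as the sup-lattice of subsets of Q x Q that are down-closed,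
   closed under joins in each variable, and saturated for the relation
   x (x) (a |> y) = (x <| a) (x) y; ordered by inclusion. *)
Definition tclosed (S : Q -> Q -> Prop) : Prop :=
  (forall x y x' y', S x y -> fle x' x -> fle y' y -> S x' y') /\
  (forall X y, (forall x, X x -> S x y) -> S (fsup X) y) /\
  (forall x Y, (forall y, Y y -> S x y) -> S x (fsup Y)) /\
  (forall x a y, S x (actL a y) <-> S (actR x a) y).

Definition tjoin (Fam : (Q -> Q -> Prop) -> Prop) : Q -> Q -> Prop :=
  fun x y => forall T, tclosed T ->
    (forall S, Fam S -> forall x' y', S x' y' -> T x' y') -> T x y.

Definition muA (S : Q -> Q -> Prop) : Q :=
  fsup (fun z => exists x y, S x y /\ z = mul x y).

Definition muA_radj (z : Q) : Q -> Q -> Prop :=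
  tjoin (fun S => tclosed S /\ fle (muA S) z).

Definition is_multiplicative : Prop :=
  forall Z : Q -> Prop, forall x y,
    muA_radj (fsup Z) x y <->
    tjoin (fun S => exists z, Z z /\ S = muA_radj z) x y.

Definition unit_laws : Prop :=
  forall a : Q,
    fsup (fun w => exists x y, fle (mul x y) a /\ w = actL (ups x) y) = a.

Definition inverse_law : Prop :=
  forall a : Q,
    actL (ups a) ftop = fsup (fun w => exists x y, fle (mul x (inv y)) a /\ w = fmeet x y).

Definition is_groupoid_quantale : Prop :=
  is_multiplicative /\ is_equivariant_support /\ is_reflexive /\
  is_based_quantal_frame /\ unit_laws /\ inverse_law.

End GQ.

(* Main.v *)
Require Import Defs.
From Stdlib Require Import FunctionalExtensionality PropExtensionality ProofIrrelevance ClassicalEpsilon.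

Set Implicit Arguments.

Section FL.
Context {F : Frame}.
Implicit Types x y z : F.

Lemma lrefl x : fle x x. Proof. apply fle_refl. Qed.
Lemma ltrans x y z : fle x y -> fle y z -> fle x z. Proof. apply fle_trans. Qed.
Lemma lanti x y : fle x y -> fle y x -> x = y. Proof. apply fle_antisym. Qed.
Lemma lsup_ub (S : F -> Prop) x : S x -> fle x (fsup S). Proof. apply fsup_ub. Qed.
Lemma lsup_lub (S : F -> Prop) y : (forall x, S x -> fle x y) -> fle (fsup S) y.
Proof. apply fsup_lub. Qed.
Lemma lm1 x y : fle (fmeet x y) x. Proof. apply fmeet_lb1. Qed.
Lemma lm2 x y : fle (fmeet x y) y. Proof. apply fmeet_lb2. Qed.
Lemma lglb x y z : fle z x -> fle z y -> fle z (fmeet x y). Proof. apply fmeet_glb. Qed.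
Lemma ltop x : fle x ftop. Proof. apply ftop_max. Qed.

Lemma meetC x y : fmeet x y = fmeet y x.
Proof. apply lanti; apply lglb; auto using lm1, lm2. Qed.
Lemma meetA x y z : fmeet x (fmeet y z) = fmeet (fmeet x y) z.
Proof.
  apply lanti; repeat apply lglb.
  - apply lm1.
  - eapply ltrans; [apply lm2|apply lm1].
  - eapply ltrans; [apply lm2|apply lm2].
  - eapply ltrans; [apply lm1|apply lm1].
  - eapply ltrans; [apply lm1|apply lm2].
  - apply lm2.
Qed.
Lemma meet4 (a b c d : F) : fmeet (fmeet a b) (fmeet c d) = fmeet (fmeet a c) (fmeet b d).
Proof.
  rewrite <- !meetA. f_equal. rewrite !meetA. f_equal. apply meetC.
Qed.
Lemma meet_id x : fmeet x x = x.
Proof. apply lanti; [apply lm1| apply lglb; apply lrefl]. Qed.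
Lemma meet_top x : fmeet x ftop = x.
Proof. apply lanti; [apply lm1| apply lglb; [apply lrefl|apply ltop]]. Qed.
Lemma top_meet x : fmeet ftop x = x.
Proof. rewrite meetC; apply meet_top. Qed.
Lemma meet_le x y : fle x y -> fmeet x y = x.
Proof. intro H; apply lanti; [apply lm1| apply lglb; auto using lrefl]. Qed.
Lemma meet_mono x y x' y' : fle x x' -> fle y y' -> fle (fmeet x y) (fmeet x' y').
Proof. intros; apply lglb; [eapply ltrans; [apply lm1|auto] | eapply ltrans; [apply lm2|auto]]. Qed.
Lemma meet_le_l x y z : fle x z -> fle (fmeet x y) z.
Proof. intros; eapply ltrans; [apply lm1|auto]. Qed.
Lemma meet_le_r x y z : fle y z -> fle (fmeet x y) z.
Proof. intros; eapply ltrans; [apply lm2|auto]. Qed.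
Lemma top_le x : fle ftop x -> x = ftop.
Proof. intro; apply lanti; auto using ltop. Qed.

Lemma sup_le (S S' : F -> Prop) :
  (forall x, S x -> exists y, S' y /\ fle x y) -> fle (fsup S) (fsup S').
Proof.
  intro H; apply lsup_lub; intros x Hx; destruct (H x Hx) as [y [Hy Hle]].
  eapply ltrans; [exact Hle| apply lsup_ub; auto].
Qed.
Lemma sup_ext (S S' : F -> Prop) :
  (forall x, S x -> exists y, S' y /\ fle x y) ->
  (forall x, S' x -> exists y, S y /\ fle x y) -> fsup S = fsup S'.
Proof. intros; apply lanti; apply sup_le; auto. Qed.

Lemma distr_l x (S : F -> Prop) :
  fle (fmeet x (fsup S)) (fsup (fun z => exists s, S s /\ z = fmeet x s)).
Proof. rewrite fdistr; apply lrefl. Qed.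
Lemma distr_r x (S : F -> Prop) :
  fle (fmeet (fsup S) x) (fsup (fun z => exists s, S s /\ z = fmeet s x)).
Proof.
  rewrite meetC, fdistr; apply sup_le; intros z [s [Hs ->]].
  exists (fmeet s x); split; [eauto| rewrite meetC; apply lrefl].
Qed.

Lemma le_by_ub x y : (forall z, fle y z -> fle x z) -> fle x y.
Proof. intro H; apply H, lrefl. Qed.
Lemma eq_by_ub x y : (forall z, fle x z <-> fle y z) -> x = y.
Proof. intro H; apply lanti; apply le_by_ub; intros z; apply H. Qed.

End FL.

Arguments lrefl {F} x.
Arguments ltop {F} x.

Section FH.
Lemma fh_top (A B : Frame) (f : A -> B) : frame_hom f -> f ftop = ftop.
Proof. intros [H _]; exact H. Qed.
Lemma fh_meet (A B : Frame) (f : A -> B) : frame_hom f -> forall x y, f (fmeet x y) = fmeet (f x) (f y).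
Proof. intros [_ [H _]]; exact H. Qed.
Lemma fh_sup (A B : Frame) (f : A -> B) : frame_hom f -> forall S, f (fsup S) = fsup (img f S).
Proof. intros [_ [_ H]]; exact H. Qed.
Lemma fh_mono (A B : Frame) (f : A -> B) : frame_hom f -> forall x y, fle x y -> fle (f x) (f y).
Proof.
  intros Hf x y H. rewrite <- (meet_le _ _ H), (fh_meet Hf). apply lm2.
Qed.
Lemma fh_comp (A B C : Frame) (f : A -> B) (g : B -> C) :
  frame_hom f -> frame_hom g -> frame_hom (fun x => g (f x)).
Proof.
  intros Hf Hg; split; [|split].
  - rewrite (fh_top Hf); apply (fh_top Hg).
  - intros; rewrite (fh_meet Hf), (fh_meet Hg); auto.
  - intros S; rewrite (fh_sup Hf), (fh_sup Hg). f_equal.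
    apply functional_extensionality; intro z; apply propositional_extensionality.
    unfold img; split.
    + intros [y [[x [Hx ->]] ->]]; eauto.
    + intros [x [Hx ->]]; eauto.
Qed.
Lemma fh_id (A : Frame) : frame_hom (fun x : A => x).
Proof.
  split; [|split]; auto. intros S; f_equal.
  apply functional_extensionality; intro z; apply propositional_extensionality.
  unfold img; split; [intros; exists z; auto| intros [x [Hx ->]]; auto].
Qed.
Lemma fh_sup_le (A B : Frame) (f : A -> B) : frame_hom f -> forall S,
  fle (f (fsup S)) (fsup (fun z => exists x, S x /\ z = f x)).
Proof. intros Hf S; rewrite (fh_sup Hf); apply lrefl. Qed.
End FH.

Section LA.
Variables (A B : Frame) (f : A -> B).
Lemma left_adj_eq (L : B -> A) : (forall x y, fle (L x) y <-> fle x (f y)) ->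
  forall x, left_adj f x = L x.
Proof.
  intros H x. unfold left_adj, finf. apply lanti.
  - apply lsup_lub. intros z Hz. apply Hz. apply H, lrefl.
  - apply lsup_ub. intros s Hs. apply H, Hs.
Qed.

Hypothesis Hadj : forall x y, fle (left_adj f x) y <-> fle x (f y).
Lemma la_unit x : fle x (f (left_adj f x)). Proof. apply Hadj, lrefl. Qed.
Lemma la_mono x y : fle x y -> fle (left_adj f x) (left_adj f y).
Proof. intro; apply Hadj; eapply ltrans; [eauto| apply la_unit]. Qed.
Lemma la_sup S : left_adj f (fsup S) = fsup (img (left_adj f) S).
Proof.
  apply lanti.
  - apply Hadj, lsup_lub; intros x Hx. apply Hadj, lsup_ub. exists x; auto.
  - apply lsup_lub; intros y [x [Hx ->]]. apply la_mono, lsup_ub; auto.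
Qed.
Lemma la_fmono (Hf : frame_hom f) y : fle (left_adj f (f y)) y.
Proof. apply Hadj, lrefl. Qed.
End LA.

Ltac le_atom := first [ apply lrefl | (apply meet_le_l; le_atom) | (apply meet_le_r; le_atom) | apply ltop ].
Ltac meet_ac := apply lanti; repeat apply lglb; le_atom.

Lemma meet_sup_r {F : Frame} (S : F -> Prop) q : fmeet (fsup S) q = fsup (img (fun s => fmeet s q) S).
Proof. rewrite meetC, fdistr. f_equal. apply functional_extensionality; intro z;
  apply propositional_extensionality; split; intros [s [Hs ->]]; exists s; split; auto; apply meetC. Qed.
Lemma img_comp {X Y Z : Type} (f : X -> Y) (g : Y -> Z) S : img g (img f S) = img (fun x => g (f x)) S.
Proof. apply functional_extensionality; intro z; apply propositional_extensionality; split.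
  - intros [y [[x [Hx ->]] ->]]; exists x; auto.
  - intros [x [Hx ->]]; exists (f x); split; auto; exists x; auto. Qed.
Set Implicit Arguments.

Section Tens.
Context {A B C : Frame} (al : A -> B) (be : A -> C).

Definition gclosed (S : B -> C -> Prop) : Prop :=
  (forall x y x' y', S x y -> fle x' x -> fle y' y -> S x' y') /\
  (forall X y, (forall x, X x -> S x y) -> S (fsup X) y) /\
  (forall x Y, (forall y, Y y -> S x y) -> S x (fsup Y)) /\
  (forall x a y, S x (fmeet (be a) y) <-> S (fmeet (al a) x) y).

Definition cl (P : B -> C -> Prop) : B -> C -> Prop :=
  fun x y => forall T, gclosed T -> (forall x' y', P x' y' -> T x' y') -> T x y.

Lemma cl_incl P x y : P x y -> cl P x y.
Proof. intros H T _ HT; auto. Qed.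
Lemma cl_min P T : gclosed T -> (forall x y, P x y -> T x y) -> forall x y, cl P x y -> T x y.
Proof. intros HT H x y Hc; apply Hc; auto. Qed.
Lemma cl_closed P : gclosed (cl P).
Proof.
  split; [|split; [|split]].
  - intros x y x' y' H Hx Hy T HT HP. pose proof HT as [Hd _]. apply (Hd x y x' y'); [apply H; auto|auto|auto].
  - intros X y H T HT HP. pose proof HT as [_ [Hs _]]. apply Hs. intros x Hx; apply H; auto.
  - intros x Y H T HT HP. pose proof HT as [_ [_ [Hs _]]]. apply Hs. intros y Hy; apply H; auto.
  - intros x a y; split; intros H T HT HP; pose proof HT as [_ [_ [_ Hs]]]; apply Hs; apply H; auto.
Qed.
Lemma cl_of_closed S : gclosed S -> forall x y, cl S x y <-> S x y.
Proof. intros HS x y; split; [apply cl_min; auto| apply cl_incl]. Qed.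

Lemma inter_closed (I : Type) (Fm : I -> B -> C -> Prop) :
  (forall i, gclosed (Fm i)) -> gclosed (fun x y => forall i, Fm i x y).
Proof.
  intros H; split; [|split; [|split]].
  - intros x y x' y' Hxy Hx Hy i. destruct (H i) as [Hd _]; eauto.
  - intros X y HX i. destruct (H i) as [_ [Hs _]]; apply Hs; intros; apply HX; auto.
  - intros x Y HY i. destruct (H i) as [_ [_ [Hs _]]]; apply Hs; intros; apply HY; auto.
  - intros x a y; split; intros Hi i; destruct (H i) as [_ [_ [_ Hs]]]; apply Hs; auto.
Qed.

Lemma Rpq_closed J p q : gclosed J -> gclosed (fun a b => J (fmeet a p) (fmeet b q)).
Proof.
  intros [Hd [Hsx [Hsy Hsat]]]; split; [|split; [|split]].
  - intros x y x' y' H Hx Hy. eapply Hd; [exact H| |]; apply meet_mono; auto using lrefl.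
  - intros X y H. eapply Hd; [| apply distr_r | apply lrefl].
    apply Hsx. intros z [s [Hs ->]]. auto.
  - intros x Y H. eapply Hd; [| apply lrefl | apply distr_r].
    apply Hsy. intros z [s [Hs ->]]. auto.
  - intros x a y. rewrite <- !meetA. apply Hsat.
Qed.
Lemma Rpq_closed' J p q : gclosed J -> gclosed (fun a b => J (fmeet p a) (fmeet q b)).
Proof.
  intros HJ. pose proof (Rpq_closed p q HJ) as H.
  replace (fun a b => J (fmeet p a) (fmeet q b)) with (fun a b => J (fmeet a p) (fmeet b q)); auto.
  apply functional_extensionality; intro a; apply functional_extensionality; intro b.
  rewrite (meetC a), (meetC b); auto.
Qed.

Lemma meet_cl (P Q : B -> C -> Prop) J : gclosed J ->
  (forall a b a' b', P a b -> Q a' b' -> J (fmeet a a') (fmeet b b')) ->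
  forall a b, cl P a b -> cl Q a b -> J a b.
Proof.
  intros HJ H a b HP HQ.
  assert (R1 : forall x y, cl P x y -> forall a' b', cl Q a' b' -> J (fmeet x a') (fmeet y b')).
  { intros x y Hxy a' b' HQ'. revert x y Hxy.
    apply (cl_min (P := P) (T := fun x y => J (fmeet x a') (fmeet y b'))); [apply Rpq_closed; auto|].
    intros x y Hp. revert a' b' HQ'.
    apply (cl_min (P := Q) (T := fun a' b' => J (fmeet x a') (fmeet y b'))); [apply Rpq_closed'; auto|].
    intros; apply H; auto. }
  rewrite <- (meet_id a), <- (meet_id b). apply R1; auto.
Qed.

Definition Tcar := {S : B -> C -> Prop | gclosed S}.
Definition TS (S : Tcar) := proj1_sig S.
Lemma Teq (S S' : Tcar) : (forall x y, TS S x y <-> TS S' x y) -> S = S'.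
Proof.
  destruct S as [S HS], S' as [S' HS']; simpl; intro H.
  assert (S = S') as ->.
  { apply functional_extensionality; intro x; apply functional_extensionality; intro y.
    apply propositional_extensionality; auto. }
  f_equal; apply proof_irrelevance.
Qed.

Definition Tle (S S' : Tcar) := forall x y, TS S x y -> TS S' x y.
Definition Tsup (Fm : Tcar -> Prop) : Tcar :=
  exist _ (cl (fun x y => exists S, Fm S /\ TS S x y)) (cl_closed _).
Lemma meet_closed S S' : gclosed S -> gclosed S' -> gclosed (fun x y => S x y /\ S' x y).
Proof.
  intros H H'.
  pose proof (inter_closed (I := bool) (fun b => if b then S else S')) as HI.
  destruct HI as [Hd [Hsx [Hsy Hsat]]]. { intros []; auto. }
  split; [|split; [|split]].
  - intros x y x' y' [h1 h2] Hx Hy.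
    pose proof (Hd x y x' y' (fun b => if b as b0 return (if b0 then S else S') x y then h1 else h2) Hx Hy) as K.
    exact (conj (K true) (K false)).
  - intros X y HX.
    pose proof (Hsx X y (fun x Hx b => if b as b0 return (if b0 then S else S') x y
                       then proj1 (HX x Hx) else proj2 (HX x Hx))) as K.
    exact (conj (K true) (K false)).
  - intros x Y HY.
    pose proof (Hsy x Y (fun y Hy b => if b as b0 return (if b0 then S else S') x y
                       then proj1 (HY y Hy) else proj2 (HY y Hy))) as K.
    exact (conj (K true) (K false)).
  - intros x a y; destruct H as [_ [_ [_ Ha]]], H' as [_ [_ [_ Hb]]].
    rewrite Ha, Hb; tauto.
Qed.
Definition Tmeet (S S' : Tcar) : Tcar :=
  exist _ (fun x y => TS S x y /\ TS S' x y) (meet_closed (proj2_sig S) (proj2_sig S')).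
Lemma top_closed : gclosed (fun _ _ => True).
Proof. split; [|split; [|split]]; intros; tauto. Qed.
Definition Ttop : Tcar := exist _ (fun _ _ => True) top_closed.

Lemma Tdistr S Fm : Tmeet S (Tsup Fm) = Tsup (img (Tmeet S) Fm).
Proof.
  apply Teq; intros x y; simpl; split.
  - intros [H1 H2]. apply (meet_cl (P := TS S) (Q := fun x y => exists S, Fm S /\ TS S x y)).
    + apply cl_closed.
    + intros a b a' b' Hab [S' [HS' Hab']]. apply cl_incl. exists (Tmeet S S'); split.
      * exists S'; auto.
      * simpl. split.
        -- destruct (proj2_sig S) as [Hd _]. eapply Hd; [exact Hab| apply lm1 | apply lm1].
        -- destruct (proj2_sig S') as [Hd _]. eapply Hd; [exact Hab'| apply lm2 | apply lm2].
    + apply cl_incl; auto.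
    + auto.
  - intros H; split.
    + revert x y H; apply cl_min; [apply (proj2_sig S)|].
      intros x y [S' [[S'' [_ ->]] [h _]]]; auto.
    + revert x y H; apply cl_min; [apply cl_closed|].
      intros x y [S' [[S'' [HS'' ->]] [_ h]]]. apply cl_incl; eauto.
Qed.

Definition Tframe : Frame.
Proof.
  refine (@Build_Frame Tcar Tle Tsup Tmeet Ttop _ _ _ _ _ _ _ _ _ Tdistr).
  - intros S x y; auto.
  - intros S1 S2 S3 H1 H2 x y H; auto.
  - intros S1 S2 H1 H2; apply Teq; split; auto.
  - intros Fm S HS x y H. apply cl_incl; eauto.
  - intros Fm S H x y Hx. revert x y Hx; apply cl_min; [apply (proj2_sig S)|].
    intros x y [S' [HS' H']]; exact (H S' HS' x y H').
  - intros S S' x y [h _]; auto.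
  - intros S S' x y [_ h]; auto.
  - intros S1 S2 S3 H1 H2 x y H; split; auto.
  - intros S x y _; exact I.
Defined.

Definition gen (x : B) (y : C) : Tframe :=
  exist _ (cl (fun a b => a = x /\ b = y)) (cl_closed _).
Lemma mem_gen x y : TS (gen x y) x y.
Proof. apply cl_incl; auto. Qed.
Lemma gen_le x y (S : Tframe) : fle (gen x y) S <-> TS S x y.
Proof.
  split.
  - intros H; apply H, mem_gen.
  - intros H a b Hab. revert a b Hab; apply cl_min; [apply (proj2_sig S)|].
    intros a b [-> ->]; auto.
Qed.
Lemma TS_down (S : Tframe) x y x' y' : TS S x y -> fle x' x -> fle y' y -> TS S x' y'.
Proof. destruct (proj2_sig S) as [Hd _]; intros; apply (Hd x y); auto. Qed.
Lemma TS_sat (S : Tframe) x a y : TS S x (fmeet (be a) y) <-> TS S (fmeet (al a) x) y.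
Proof. destruct (proj2_sig S) as [_ [_ [_ H]]]; apply H. Qed.
Lemma TS_supx (S : Tframe) X y : (forall x, X x -> TS S x y) -> TS S (fsup X) y.
Proof. destruct (proj2_sig S) as [_ [H _]]; intros; apply H; auto. Qed.
Lemma TS_supy (S : Tframe) x Y : (forall y, Y y -> TS S x y) -> TS S x (fsup Y).
Proof. destruct (proj2_sig S) as [_ [_ [H _]]]; intros; apply H; auto. Qed.

Lemma gen_mono x y x' y' : fle x x' -> fle y y' -> fle (gen x y) (gen x' y').
Proof. intros; apply gen_le; eapply TS_down; [apply mem_gen|auto|auto]. Qed.

Lemma gen_meet x y x' y' : fmeet (gen x y) (gen x' y') = gen (fmeet x x') (fmeet y y').
Proof.
  apply lanti.
  - hnf; intros a b H; hnf in H; destruct H as [H1 H2]. apply (meet_cl (P := fun a b => a = x /\ b = y) (Q := fun a b => a = x' /\ b = y'));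
      [apply (proj2_sig (gen _ _)) | | exact H1 | exact H2].
    intros ? ? ? ? [-> ->] [-> ->]; apply mem_gen.
  - apply lglb; apply gen_mono; auto using lm1, lm2.
Qed.

Definition j1 x := gen x ftop.
Definition j2 y := gen ftop y.

Lemma gen_j x y : gen x y = fmeet (j1 x) (j2 y).
Proof. unfold j1, j2; rewrite gen_meet, meet_top, top_meet; auto. Qed.

Lemma Ttop_eq : (ftop : Tframe) = gen ftop ftop.
Proof. apply lanti; [|apply ltop]. intros a b _. eapply TS_down; [apply mem_gen| apply ltop| apply ltop]. Qed.

Lemma j1_hom : frame_hom j1.
Proof.
  split; [|split].
  - unfold j1; rewrite <- Ttop_eq; auto.
  - intros; unfold j1; rewrite gen_meet, meet_id; auto.
  - intros X. apply lanti.
    + apply gen_le. apply TS_supx. intros x Hx. apply cl_incl. exists (j1 x); split.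
      * exists x; auto.
      * apply mem_gen.
    + apply lsup_lub. intros G [x [Hx ->]]. apply gen_mono; [apply lsup_ub; auto| apply lrefl].
Qed.
Lemma j2_hom : frame_hom j2.
Proof.
  split; [|split].
  - unfold j2; rewrite <- Ttop_eq; auto.
  - intros; unfold j2; rewrite gen_meet, meet_id; auto.
  - intros X. apply lanti.
    + apply gen_le. apply TS_supy. intros x Hx. apply cl_incl. exists (j2 x); split.
      * exists x; auto.
      * apply mem_gen.
    + apply lsup_lub. intros G [x [Hx ->]]. apply gen_mono; [apply lrefl|apply lsup_ub; auto].
Qed.
Lemma j_compat a : j1 (al a) = j2 (be a).
Proof.
  unfold j1, j2; apply lanti; apply gen_le.
  - rewrite <- (meet_top (al a)). apply TS_sat. rewrite meet_top. apply mem_gen.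
  - rewrite <- (meet_top (be a)). apply TS_sat. rewrite meet_top. apply mem_gen.
Qed.

Lemma T_decomp (S : Tframe) : S = fsup (fun G => exists x y, TS S x y /\ G = gen x y).
Proof.
  apply lanti.
  - intros x y H. apply cl_incl. exists (gen x y); split; [eauto| apply mem_gen].
  - apply lsup_lub. intros G [x [y [H ->]]]. apply gen_le; auto.
Qed.

Section UP.
Context {F : Frame} (h1 : B -> F) (h2 : C -> F).
Hypotheses (Hh1 : frame_hom h1) (Hh2 : frame_hom h2) (Hc : forall a, h1 (al a) = h2 (be a)).

Definition Kmap (S : Tframe) : F :=
  fsup (fun z => exists x y, TS S x y /\ z = fmeet (h1 x) (h2 y)).

Lemma K_closed w : gclosed (fun x y => fle (fmeet (h1 x) (h2 y)) w).
Proof.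
  split; [|split; [|split]].
  - intros x y x' y' H Hx Hy. eapply ltrans; [|exact H].
    apply meet_mono; apply fh_mono; auto.
  - intros X y H. rewrite (fh_sup Hh1). eapply ltrans; [apply distr_r|].
    apply lsup_lub. intros z [s [[x [Hx ->]] ->]]. auto.
  - intros x Y H. rewrite (fh_sup Hh2). eapply ltrans; [apply distr_l|].
    apply lsup_lub. intros z [s [[y0 [Hy0 ->]] ->]]. auto.
  - intros x a y. rewrite (fh_meet Hh1), (fh_meet Hh2), Hc.
    rewrite (meetC (h2 (be a)) (h1 x)), meetA, (meetC (h1 x)). tauto.
Qed.

Lemma K_le (S : Tframe) w : fle (Kmap S) w <-> forall x y, TS S x y -> fle (fmeet (h1 x) (h2 y)) w.
Proof.
  split.
  - intros H x y Hxy. eapply ltrans; [|exact H]. apply lsup_ub; eauto.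
  - intros H. apply lsup_lub. intros z [x [y [Hxy ->]]]; auto.
Qed.

Lemma K_gen x y : Kmap (gen x y) = fmeet (h1 x) (h2 y).
Proof.
  apply lanti.
  - apply K_le. apply cl_min; [apply K_closed|]. intros a b [-> ->]; apply lrefl.
  - apply lsup_ub; exists x, y; split; [apply mem_gen|auto].
Qed.

Lemma K_hom : frame_hom Kmap.
Proof.
  split; [|split].
  - rewrite Ttop_eq, K_gen, (fh_top Hh1), (fh_top Hh2), meet_id; auto.
  - intros S S'. apply lanti.
    + apply lglb; apply sup_le; intros z [x [y [[H1 H2] ->]]]; exists (fmeet (h1 x) (h2 y)); split;
        eauto using lrefl.
    + eapply ltrans; [apply distr_r|]. apply lsup_lub. intros z [s [[x [y [Hxy ->]]] ->]].
      eapply ltrans; [apply distr_l|]. apply lsup_lub. intros z [s' [[x' [y' [Hxy' ->]]] ->]].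
      apply lsup_ub. exists (fmeet x x'), (fmeet y y'); split.
      * split; [eapply TS_down; [exact Hxy| apply lm1| apply lm1]
               |eapply TS_down; [exact Hxy'| apply lm2| apply lm2]].
      * rewrite (fh_meet Hh1), (fh_meet Hh2). apply meet4.
  - intros Fm. apply lanti.
    + apply K_le. apply cl_min; [apply K_closed|]. intros x y [S [HS Hxy]].
      eapply ltrans; [|apply lsup_ub; exists S; split; eauto].
      apply lsup_ub; eauto.
    + apply lsup_lub. intros z [S [HS ->]]. apply K_le. intros x y Hxy.
      apply lsup_ub. exists x, y; split; auto. apply cl_incl; eauto.
Qed.

Lemma K_j1 x : Kmap (j1 x) = h1 x.
Proof. unfold j1; rewrite K_gen, (fh_top Hh2), meet_top; auto. Qed.
Lemma K_j2 y : Kmap (j2 y) = h2 y.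
Proof. unfold j2; rewrite K_gen, (fh_top Hh1), top_meet; auto. Qed.

Lemma K_unique (H : Tframe -> F) : frame_hom H -> (forall x, H (j1 x) = h1 x) ->
  (forall y, H (j2 y) = h2 y) -> forall S, H S = Kmap S.
Proof.
  intros HH H1 H2 S. rewrite (T_decomp S), (fh_sup HH), <- T_decomp.
  apply sup_ext.
  - intros z [G [[x [y [Hxy ->]]] ->]]. exists (fmeet (h1 x) (h2 y)); split; [eauto|].
    rewrite gen_j, (fh_meet HH), H1, H2; apply lrefl.
  - intros z [x [y [Hxy ->]]]. exists (H (gen x y)); split.
    + exists (gen x y); split; eauto.
    + rewrite gen_j, (fh_meet HH), H1, H2; apply lrefl.
Qed.
End UP.

Lemma T_ext {F : Frame} (H H' : Tframe -> F) : frame_hom H -> frame_hom H' ->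
  (forall x, H (j1 x) = H' (j1 x)) -> (forall y, H (j2 y) = H' (j2 y)) -> forall S, H S = H' S.
Proof.
  intros HH HH' E1 E2 S.
  rewrite (K_unique (fun x => H' (j1 x)) (fun y => H' (j2 y)) HH E1 E2).
  rewrite (K_unique (fun x => H' (j1 x)) (fun y => H' (j2 y)) HH' (fun _ => eq_refl) (fun _ => eq_refl)); auto.
Qed.

Section PO.
Context {P : Frame} (p1 : B -> P) (p2 : C -> P).
Hypothesis Hpo : is_pushout al be p1 p2.

Definition bas x y := fmeet (p1 x) (p2 y).

Lemma po_main : exists h : P -> Tframe, frame_hom h /\
  (forall w x y, TS (h w) x y <-> fle (bas x y) w) /\
  (forall w, Kmap p1 p2 (h w) = w) /\ (forall S, h (Kmap p1 p2 S) = S).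
Proof.
  destruct Hpo as [Hp1 [Hp2 [Hc UP]]].
  destruct (UP Tframe j1 j2 j1_hom j2_hom j_compat) as [h [Hh [E1 [E2 Hu]]]].
  pose proof (K_hom Hp1 Hp2 Hc) as Hk.
  assert (KH : forall w, Kmap p1 p2 (h w) = w).
  { intros w. destruct (UP P p1 p2 Hp1 Hp2 Hc) as [h0 [_ [_ [_ Hu0]]]].
    rewrite (Hu0 (fun w => Kmap p1 p2 (h w))), (Hu0 (fun w => w)); auto.
    - apply fh_id.
    - apply fh_comp; auto.
    - intros; rewrite E1; apply (K_j1 Hp1 Hp2 Hc).
    - intros; rewrite E2; apply (K_j2 Hp1 Hp2 Hc). }
  assert (HK : forall S, h (Kmap p1 p2 S) = S).
  { intros S. apply (T_ext (H := fun S => h (Kmap p1 p2 S)) (H' := fun S => S)).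
    - apply fh_comp; auto.
    - apply fh_id.
    - intros; rewrite (K_j1 Hp1 Hp2 Hc); auto.
    - intros; rewrite (K_j2 Hp1 Hp2 Hc); auto. }
  exists h; split; [auto|split; [|split; auto]].
  intros w x y; split.
  - intros H. rewrite <- (KH w). unfold bas. rewrite <- (K_gen Hp1 Hp2 Hc).
    apply (fh_mono Hk). apply gen_le; auto.
  - intros H. apply gen_le. rewrite gen_j, <- E1, <- E2, <- (fh_meet Hh).
    apply (fh_mono Hh); auto.
Qed.

Lemma po_decomp w : w = fsup (fun z => exists x y, fle (bas x y) w /\ z = bas x y).
Proof.
  destruct po_main as [h [Hh [Hm [KH HK]]]].
  rewrite <- (KH w) at 1. unfold Kmap. f_equal.
  apply functional_extensionality; intro z; apply propositional_extensionality.
  split; intros [x [y [H ->]]]; exists x, y; split; auto; apply Hm; auto.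
Qed.

Lemma po_induct (S : B -> C -> Prop) : gclosed S -> forall x y,
  fle (bas x y) (fsup (fun z => exists x' y', S x' y' /\ z = bas x' y')) -> S x y.
Proof.
  intros HS x y H.
  destruct po_main as [h [Hh [Hm [KH HK]]]].
  set (ST := exist _ S HS : Tframe).
  assert (E : fsup (fun z => exists x' y', S x' y' /\ z = bas x' y') = Kmap p1 p2 ST) by auto.
  rewrite E in H. apply Hm in H. rewrite HK in H. exact H.
Qed.
End PO.

End Tens.

Lemma TS_meet {A B C : Frame} (al : A -> B) (be : A -> C) (S S' : Tframe al be) x y :
  TS (fmeet S S') x y <-> TS S x y /\ TS S' x y.
Proof. reflexivity. Qed.
Lemma Tle_iff {A B C : Frame} (al : A -> B) (be : A -> C) (S S' : Tframe al be) :
  fle S S' <-> forall x y, TS S x y -> TS S' x y.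
Proof. reflexivity. Qed.
Local Unset Implicit Arguments.
Lemma memg {A B C : Frame} (al : A -> B) (be : A -> C) (x : B) (y : C) : TS (gen al be x y) x y.
Proof. apply gen_le, lrefl. Qed.
Set Implicit Arguments.

Section GE.
Variable G : LGData.
Hypothesis HG : is_localic_groupoid G.

Local Notation D := (dst G).
Local Notation R := (rst G).
Local Notation U := (ust G).
Local Notation I := (ist G).
Local Notation M := (mst G).
Local Notation P1 := (pi1 G).
Local Notation P2 := (pi2 G).

Lemma hD : frame_hom D. Proof. apply HG. Qed.
Lemma hR : frame_hom R. Proof. apply HG. Qed.
Lemma hU : frame_hom U. Proof. apply HG. Qed.
Lemma hI : frame_hom I. Proof. apply HG. Qed.
Lemma hM : frame_hom M. Proof. apply HG. Qed.
Lemma Hpo : is_pushout R D P1 P2. Proof. apply HG. Qed.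
Lemma hP1 : frame_hom P1. Proof. apply Hpo. Qed.
Lemma hP2 : frame_hom P2. Proof. apply Hpo. Qed.
Lemma P12 a : P1 (R a) = P2 (D a). Proof. apply Hpo. Qed.
Lemma uD a : U (D a) = a. Proof. apply HG. Qed.
Lemma uR a : U (R a) = a. Proof. apply HG. Qed.
Lemma mD a : M (D a) = P1 (D a). Proof. apply HG. Qed.
Lemma mR a : M (R a) = P2 (R a). Proof. apply HG. Qed.
Lemma iD a : I (D a) = R a. Proof. apply HG. Qed.
Lemma iR a : I (R a) = D a. Proof. apply HG. Qed.
Lemma ax_unitL : forall h : G2 G -> G1 G, frame_hom h ->
     (forall x, h (P1 x) = D (U x)) -> (forall x, h (P2 x) = x) ->
     forall x, h (M x) = x.
Proof. apply HG. Qed.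
Lemma ax_unitR : forall h : G2 G -> G1 G, frame_hom h ->
     (forall x, h (P1 x) = x) -> (forall x, h (P2 x) = R (U x)) ->
     forall x, h (M x) = x.
Proof. apply HG. Qed.
Lemma ax_invL : forall h : G2 G -> G1 G, frame_hom h ->
     (forall x, h (P1 x) = x) -> (forall x, h (P2 x) = I x) ->
     forall x, h (M x) = D (U x).
Proof. apply HG. Qed.
Lemma ax_invR : forall h : G2 G -> G1 G, frame_hom h ->
     (forall x, h (P1 x) = I x) -> (forall x, h (P2 x) = x) ->
     forall x, h (M x) = R (U x).
Proof. apply HG. Qed.
Lemma ax_assoc : forall (F : Frame) (g1 g2 g3 : G1 G -> F),
     frame_hom g1 -> frame_hom g2 -> frame_hom g3 ->
     (forall a, g1 (R a) = g2 (D a)) ->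
     (forall a, g2 (R a) = g3 (D a)) ->
     forall h12 h23 k l : G2 G -> F,
       frame_hom h12 -> frame_hom h23 -> frame_hom k -> frame_hom l ->
       (forall x, h12 (P1 x) = g1 x) -> (forall x, h12 (P2 x) = g2 x) ->
       (forall x, h23 (P1 x) = g2 x) -> (forall x, h23 (P2 x) = g3 x) ->
       (forall x, k (P1 x) = h12 (M x)) -> (forall x, k (P2 x) = g3 x) ->
       (forall x, l (P1 x) = g1 x) -> (forall x, l (P2 x) = h23 (M x)) ->
       forall x, k (M x) = l (M x).
Proof. apply HG. Qed.

Section Pts.
Context {F : Frame}.
Implicit Types a b c : G1 G -> F.

Definition comp a b := forall x, a (R x) = b (D x).
Definition pairP a b (p : G2 G -> F) :=
  frame_hom p /\ (forall x, p (P1 x) = a x) /\ (forall x, p (P2 x) = b x).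
Definition pair a b : G2 G -> F :=
  epsilon (inhabits (fun _ => ftop)) (pairP a b).

Lemma pair_spec a b : frame_hom a -> frame_hom b -> comp a b -> pairP a b (pair a b).
Proof.
  intros Ha Hb Hc. unfold pair. apply epsilon_spec.
  destruct Hpo as [_ [_ [_ UP]]].
  destruct (UP F a b Ha Hb Hc) as [h [Hh [E1 [E2 _]]]]. exists h; split; auto.
Qed.
Lemma pair_fh a b : frame_hom a -> frame_hom b -> comp a b -> frame_hom (pair a b).
Proof. intros; apply pair_spec; auto. Qed.
Lemma pair_1 a b : frame_hom a -> frame_hom b -> comp a b -> forall x, pair a b (P1 x) = a x.
Proof. intros; apply pair_spec; auto. Qed.
Lemma pair_2 a b : frame_hom a -> frame_hom b -> comp a b -> forall x, pair a b (P2 x) = b x.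
Proof. intros; apply pair_spec; auto. Qed.
Lemma pair_uniq a b p : frame_hom a -> frame_hom b -> comp a b -> frame_hom p ->
  (forall x, p (P1 x) = a x) -> (forall x, p (P2 x) = b x) -> p = pair a b.
Proof.
  intros Ha Hb Hc Hp E1 E2. apply functional_extensionality; intro w.
  destruct Hpo as [_ [_ [_ UP]]].
  destruct (UP F a b Ha Hb Hc) as [h [Hh [_ [_ Hu]]]].
  destruct (pair_spec Ha Hb Hc) as [H1 [H2 H3]].
  rewrite (Hu p), (Hu (pair a b)); auto.
Qed.

Definition mulp a b : G1 G -> F := fun x => pair a b (M x).
Definition inv a : G1 G -> F := fun x => a (I x).
Definition ud a : G1 G -> F := fun x => a (D (U x)).
Definition ur a : G1 G -> F := fun x => a (R (U x)).

Lemma mulp_fh a b : frame_hom a -> frame_hom b -> comp a b -> frame_hom (mulp a b).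
Proof. intros; apply (fh_comp (f:=M) (g:=pair a b)); [apply hM| apply pair_fh; auto]. Qed.
Lemma mulp_D a b : frame_hom a -> frame_hom b -> comp a b -> forall x, mulp a b (D x) = a (D x).
Proof. intros; unfold mulp; rewrite mD, pair_1; auto. Qed.
Lemma mulp_R a b : frame_hom a -> frame_hom b -> comp a b -> forall x, mulp a b (R x) = b (R x).
Proof. intros; unfold mulp; rewrite mR, pair_2; auto. Qed.
Lemma inv_fh a : frame_hom a -> frame_hom (inv a).
Proof. intros; apply (fh_comp (f:=I) (g:=a)); [apply hI| auto]. Qed.
Lemma ud_fh a : frame_hom a -> frame_hom (ud a).
Proof. intros; unfold ud; apply (fh_comp (f:=fun x => D (U x)) (g:=a)); [apply fh_comp; [apply hU|apply hD]|auto]. Qed.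
Lemma ur_fh a : frame_hom a -> frame_hom (ur a).
Proof. intros; unfold ur; apply (fh_comp (f:=fun x => R (U x)) (g:=a)); [apply fh_comp; [apply hU|apply hR]|auto]. Qed.

Lemma comp_mul_l a b c : frame_hom a -> frame_hom b -> comp a b -> comp b c -> comp (mulp a b) c.
Proof. intros Ha Hb H1 H2 x; rewrite mulp_R; auto. Qed.
Lemma comp_mul_r a b c : frame_hom b -> frame_hom c -> comp a b -> comp b c -> comp a (mulp b c).
Proof. intros Hb Hc H1 H2 x; rewrite mulp_D; auto. Qed.
Lemma comp_a_inv a : comp a (inv a).
Proof. intros x; unfold inv; rewrite iD; auto. Qed.
Lemma comp_inv_a a : comp (inv a) a.
Proof. intros x; unfold inv; rewrite iR; auto. Qed.
Lemma comp_ud a : comp (ud a) a.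
Proof. intros x; unfold ud; rewrite uR; auto. Qed.
Lemma comp_ur a : comp a (ur a).
Proof. intros x; unfold ur; rewrite uD; auto. Qed.

End Pts.

Lemma pair_nat {F F' : Frame} (f : F -> F') (a b : G1 G -> F) : frame_hom f -> frame_hom a -> frame_hom b -> comp a b ->
  pair (fun x => f (a x)) (fun x => f (b x)) = (fun w => f (pair a b w)).
Proof.
  intros Hf Ha Hb Hc. symmetry. apply pair_uniq.
  - apply fh_comp; auto.
  - apply fh_comp; auto.
  - intros x; simpl; rewrite Hc; auto.
  - apply fh_comp; auto. apply pair_fh; auto.
  - intros; rewrite pair_1; auto.
  - intros; rewrite pair_2; auto.
Qed.


Lemma comp_univ_unit : comp (fun x => D (U x)) (fun x => x).
Proof. intro x; simpl; rewrite uR; auto. Qed.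

Section Laws.
Context {F : Frame}.
Implicit Types a b c : G1 G -> F.

Lemma mul_ud a : frame_hom a -> mulp (ud a) a = a.
Proof.
  intros Ha. apply functional_extensionality; intro x. unfold mulp.
  pose proof (pair_nat (f := a) (a := fun x => D (U x)) (b := fun x => x) Ha
     (fh_comp hU hD) (fh_id _) comp_univ_unit) as E.
  transitivity (pair (fun x => a (D (U x))) (fun x => a x) (M x)); [reflexivity|].
  cbv beta in E. rewrite E. f_equal. apply ax_unitL.
  - apply pair_fh; [apply (fh_comp hU hD)| apply fh_id| apply comp_univ_unit].
  - intros; apply pair_1 with (a := fun x => D (U x)) (b := fun x => x);
      [apply (fh_comp hU hD)| apply fh_id| apply comp_univ_unit].
  - intros; apply pair_2 with (a := fun x => D (U x)) (b := fun x => x);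
      [apply (fh_comp hU hD)| apply fh_id| apply comp_univ_unit].
Qed.

Lemma mul_via a (s t e : G1 G -> G1 G) : frame_hom a -> frame_hom s -> frame_hom t -> comp s t ->
  (forall x, pair s t (M x) = e x) ->
  mulp (fun x => a (s x)) (fun x => a (t x)) = (fun x => a (e x)).
Proof.
  intros Ha Hs Ht Hc He. apply functional_extensionality; intro x. unfold mulp.
  pose proof (pair_nat (f := a) (a := s) (b := t) Ha Hs Ht Hc) as E.
  rewrite E, He; auto.
Qed.

Lemma mul_ur a : frame_hom a -> mulp a (ur a) = a.
Proof.
  intros Ha. assert (Hc : comp (fun x : G1 G => x) (fun x => R (U x))).
  { intro x; simpl; rewrite uD; auto. }
  apply (@mul_via a (fun x => x) (fun x => R (U x)) (fun x => x) Ha (fh_id _)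
    (fh_comp hU hR) Hc).
  apply ax_unitR.
  - apply pair_fh; auto using fh_id. apply (fh_comp hU hR).
  - intros; apply pair_1 with (a := fun x => x) (b := fun x => R (U x)); auto using fh_id. apply (fh_comp hU hR).
  - intros; apply pair_2 with (a := fun x => x) (b := fun x => R (U x)); auto using fh_id. apply (fh_comp hU hR).
Qed.

Lemma mul_inv_r a : frame_hom a -> mulp a (inv a) = ud a.
Proof.
  intros Ha. assert (Hc : comp (fun x : G1 G => x) I).
  { intro x; simpl; rewrite iD; auto. }
  apply (@mul_via a (fun x => x) I (fun x => D (U x)) Ha (fh_id _) hI Hc).
  apply ax_invL.
  - apply pair_fh; auto using fh_id, hI.
  - intros; apply pair_1 with (a := fun x => x) (b := I); auto using fh_id, hI.
  - intros; apply pair_2 with (a := fun x => x) (b := I); auto using fh_id, hI.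
Qed.

Lemma mul_inv_l a : frame_hom a -> mulp (inv a) a = ur a.
Proof.
  intros Ha. assert (Hc : comp I (fun x : G1 G => x)).
  { intro x; simpl; rewrite iR; auto. }
  apply (@mul_via a I (fun x => x) (fun x => R (U x)) Ha hI (fh_id _) Hc).
  apply ax_invR.
  - apply pair_fh; auto using fh_id, hI.
  - intros; apply pair_1 with (a := I) (b := fun x => x); auto using fh_id, hI.
  - intros; apply pair_2 with (a := I) (b := fun x => x); auto using fh_id, hI.
Qed.

Lemma mul_assoc a b c : frame_hom a -> frame_hom b -> frame_hom c -> comp a b -> comp b c ->
  mulp (mulp a b) c = mulp a (mulp b c).
Proof.
  intros Ha Hb Hc H1 H2. apply functional_extensionality; intro x. unfold mulp at 1 3.
  apply (ax_assoc Ha Hb Hc H1 H2 (h12 := pair a b) (h23 := pair b c)).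
  all: try (apply pair_fh); auto using mulp_fh, comp_mul_l, comp_mul_r.
  all: intros; try (apply pair_1); try (apply pair_2); auto using mulp_fh, comp_mul_l, comp_mul_r.
  - rewrite pair_1; auto using mulp_fh, comp_mul_l.
  - rewrite pair_2; auto using mulp_fh, comp_mul_r.
Qed.

Lemma inv_inv a : frame_hom a -> inv (inv a) = a.
Proof.
  intros Ha.
  assert (Hi : frame_hom (inv a)) by (apply inv_fh; auto).
  assert (Hii : frame_hom (inv (inv a))) by (apply inv_fh; auto).
  rewrite <- (mul_ur Hii).
  replace (ur (inv (inv a))) with (mulp (inv a) a).
  2:{ rewrite mul_inv_l; auto. apply functional_extensionality; intro z. unfold ur, inv.
      rewrite iR, iD; auto. }
  rewrite <- mul_assoc; auto using comp_inv_a.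
  rewrite mul_inv_l; auto.
  replace (ur (inv a)) with (ud a). 2:{ apply functional_extensionality; intro z; unfold ur, ud, inv; rewrite iR; auto. }
  apply mul_ud; auto.
Qed.

Lemma inv_mul a b : frame_hom a -> frame_hom b -> comp a b -> inv (mulp a b) = mulp (inv b) (inv a).
Proof.
  intros Ha Hb Hab.
  assert (Hp : frame_hom (mulp a b)) by (apply mulp_fh; auto).
  assert (Hia : frame_hom (inv a)) by (apply inv_fh; auto).
  assert (Hib : frame_hom (inv b)) by (apply inv_fh; auto).
  assert (Hip : frame_hom (inv (mulp a b))) by (apply inv_fh; auto).
  assert (Cba : comp (inv b) (inv a)).
  { intro z; unfold inv; rewrite iR, iD; symmetry; auto. }
  assert (Hx : frame_hom (mulp (inv b) (inv a))) by (apply mulp_fh; auto).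
  symmetry. rewrite <- (mul_ur Hx).
  replace (ur (mulp (inv b) (inv a))) with (mulp (mulp a b) (inv (mulp a b))).
  2:{ rewrite mul_inv_r; auto. apply functional_extensionality; intro z. unfold ur, ud.
      rewrite mulp_R, mulp_D; auto. unfold inv; rewrite iR; auto. }
  assert (Cxp : comp (mulp (inv b) (inv a)) (mulp a b)).
  { intro z. rewrite mulp_R, mulp_D; auto. unfold inv; rewrite iR; auto. }
  rewrite <- mul_assoc; auto using comp_a_inv.
  rewrite mul_assoc with (a := inv b); auto.
  2:{ intro z. rewrite mulp_D; auto. unfold inv; rewrite iR; auto. }
  rewrite <- mul_assoc with (a := inv a); auto using comp_inv_a.
  rewrite mul_inv_l; auto.
  replace (ur a) with (ud b). 2:{ apply functional_extensionality; intro z; unfold ur, ud; symmetry; auto. }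
  rewrite mul_ud; auto.
  rewrite mul_inv_l; auto.
  replace (ur b) with (ud (inv (mulp a b))).
  2:{ apply functional_extensionality; intro z; unfold ur, ud, inv. rewrite iD, mulp_R; auto. }
  apply mul_ud; auto.
Qed.
End Laws.


Lemma mulp_nat {F F' : Frame} (f : F -> F') (a b : G1 G -> F) : frame_hom f -> frame_hom a -> frame_hom b -> comp a b ->
  (fun x => f (mulp a b x)) = mulp (fun x => f (a x)) (fun x => f (b x)).
Proof.
  intros Hf Ha Hb Hc. apply functional_extensionality; intro x. unfold mulp.
  rewrite (pair_nat Hf Ha Hb Hc); auto.
Qed.

Lemma pair_id : pair P1 P2 = (fun w => w).
Proof.
  symmetry; apply pair_uniq; auto using hP1, hP2, fh_id.
  intro; apply P12.
Qed.
Lemma mulp_univ : mulp P1 P2 = M.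
Proof. apply functional_extensionality; intro x; unfold mulp; rewrite pair_id; auto. Qed.

End GE.
Unset Implicit Arguments.

Section MO.
Variable G : LGData.
Hypothesis HG : is_localic_groupoid G.
Hypothesis HDo : open_map (dst G).

Local Notation D := (dst G).
Local Notation R := (rst G).
Local Notation U := (ust G).
Local Notation I := (ist G).
Local Notation M := (mst G).
Local Notation P1 := (pi1 G).
Local Notation P2 := (pi2 G).

Lemma fP1 : frame_hom P1. Proof. exact (hP1 HG). Qed.
Lemma fP2 : frame_hom P2. Proof. exact (hP2 HG). Qed.
Lemma fD : frame_hom D. Proof. exact (hD HG). Qed.
Lemma fR : frame_hom R. Proof. exact (hR HG). Qed.
Lemma fM : frame_hom M. Proof. exact (hM HG). Qed.
Lemma fI : frame_hom I. Proof. exact (hI HG). Qed.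
Lemma fU : frame_hom U. Proof. exact (hU HG). Qed.
Lemma cP12 : comp G P1 P2. Proof. exact (P12 HG). Qed.

Definition dl := left_adj D.
Lemma dl_adj x y : fle (dl x) y <-> fle x (D y). Proof. apply HDo. Qed.
Lemma dl_frob x a : dl (fmeet x (D a)) = fmeet (dl x) a. Proof. apply HDo. Qed.
Lemma dl_unit x : fle x (D (dl x)). Proof. apply la_unit, HDo. Qed.
Lemma dl_mono x y : fle x y -> fle (dl x) (dl y). Proof. apply la_mono, HDo. Qed.
Lemma dl_sup S : dl (fsup S) = fsup (img dl S). Proof. apply la_sup, HDo. Qed.

Definition Tdd := Tframe D D.
Definition q1 : G1 G -> Tdd := j1 D D.
Definition q2 : G1 G -> Tdd := j2 D D.
Lemma hq1 : frame_hom q1. Proof. apply j1_hom. Qed.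
Lemma hq2 : frame_hom q2. Proof. apply j2_hom. Qed.
Lemma q12 a : q1 (D a) = q2 (D a). Proof. apply j_compat. Qed.

Lemma cP1M : forall a, P1 (D a) = M (D a). Proof. intros; rewrite (mD HG); auto. Qed.
Definition phi : Tdd -> G2 G := Kmap P1 M.
Lemma hphi : frame_hom phi. Proof. apply (K_hom D D fP1 fM cP1M). Qed.
Lemma phi_q1 x : phi (q1 x) = P1 x. Proof. apply (K_j1 D D fP1 fM cP1M). Qed.
Lemma phi_q2 x : phi (q2 x) = M x. Proof. apply (K_j2 D D fP1 fM cP1M). Qed.

Lemma hiq1 : frame_hom (inv G q1). Proof. apply (inv_fh HG), hq1. Qed.
Lemma c1 : comp G (inv G q1) q2.
Proof. intro x; unfold inv; rewrite (iR HG); apply q12. Qed.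
Lemma hm1 : frame_hom (mulp G (inv G q1) q2). Proof. apply (mulp_fh HG); auto using hiq1, hq2, c1. Qed.
Lemma c2 : comp G q1 (mulp G (inv G q1) q2).
Proof. intro x. rewrite (mulp_D HG); auto using hiq1, hq2, c1. unfold inv; rewrite (iD HG); auto. Qed.

Definition psi : G2 G -> Tdd := pair G q1 (mulp G (inv G q1) q2).
Lemma hpsi : frame_hom psi. Proof. apply (pair_fh HG); auto using hq1, hm1, c2. Qed.
Lemma psi_P1 x : psi (P1 x) = q1 x. Proof. apply (pair_1 HG); auto using hq1, hm1, c2. Qed.
Lemma psi_P2 x : psi (P2 x) = mulp G (inv G q1) q2 x. Proof. apply (pair_2 HG); auto using hq1, hm1, c2. Qed.

Lemma phi_psi w : phi (psi w) = w.
Proof.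
  assert (E : (fun w => phi (psi w)) = pair G P1 P2).
  { apply (pair_uniq HG); auto using fP1, fP2, cP12.
    - apply (fh_comp hpsi hphi).
    - intros; rewrite psi_P1, phi_q1; auto.
    - intros x. rewrite psi_P2.
      change (phi (mulp G (inv G q1) q2 x)) with ((fun x => phi (mulp G (inv G q1) q2 x)) x).
      rewrite (mulp_nat HG hphi hiq1 hq2 c1).
      replace (fun x => phi (inv G q1 x)) with (inv G P1).
      2:{ apply functional_extensionality; intro z; unfold inv; rewrite phi_q1; auto. }
      replace (fun x => phi (q2 x)) with (mulp G P1 P2).
      2:{ rewrite (mulp_univ HG). apply functional_extensionality; intro z; rewrite phi_q2; auto. }
      rewrite <- (mul_assoc HG (inv_fh HG fP1) fP1 fP2 (comp_inv_a HG P1) cP12).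
      rewrite (mul_inv_l HG fP1).
      replace (ur G P1) with (ud G P2).
      2:{ apply functional_extensionality; intro z; unfold ur, ud; rewrite cP12; auto. }
      rewrite (mul_ud HG fP2); auto. }
  change (phi (psi w)) with ((fun w => phi (psi w)) w). rewrite E, (pair_id HG); auto.
Qed.

Lemma psi_phi S : psi (phi S) = S.
Proof.
  apply (T_ext (H := fun S => psi (phi S)) (H' := fun S => S)).
  - apply (fh_comp hphi hpsi).
  - apply fh_id.
  - intros x; rewrite phi_q1, psi_P1; auto.
  - intros y. rewrite phi_q2. rewrite <- (mulp_univ HG).
    change (psi (mulp G P1 P2 y)) with ((fun y => psi (mulp G P1 P2 y)) y).
    rewrite (mulp_nat HG hpsi fP1 fP2 cP12).
    replace (fun x => psi (P1 x)) with q1 by (apply functional_extensionality; intro; rewrite psi_P1; auto).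
    replace (fun x => psi (P2 x)) with (mulp G (inv G q1) q2)
      by (apply functional_extensionality; intro; rewrite psi_P2; auto).
    rewrite <- (mul_assoc HG hq1 hiq1 hq2 (comp_a_inv HG q1) c1).
    rewrite (mul_inv_r HG hq1).
    replace (ud G q1) with (ud G q2).
    2:{ apply functional_extensionality; intro z; unfold ud; rewrite q12; auto. }
    rewrite (mul_ud HG hq2); auto.
Qed.

Definition Lq (S : Tdd) : G1 G :=
  fsup (fun z => exists x y, TS S x y /\ z = fmeet y (D (dl x))).

Lemma Zclosed y' : gclosed D D (fun x y => fle (fmeet y (D (dl x))) y').
Proof.
  split; [|split; [|split]].
  - intros x y x2 y2 H Hx Hy. eapply ltrans; [|exact H].
    apply meet_mono; auto. apply (fh_mono fD), dl_mono; auto.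
  - intros X y H. rewrite dl_sup, (fh_sup fD). eapply ltrans; [apply distr_l|].
    apply lsup_lub. intros z [s [[t [[x [Hx ->]] ->]] ->]]. auto.
  - intros x Y H. eapply ltrans; [apply distr_r|].
    apply lsup_lub. intros z [s [Hs ->]]. auto.
  - intros x a y. rewrite (meetC (D a) x), dl_frob, (fh_meet fD).
    rewrite (meetC (D (dl x)) (D a)), meetA, (meetC (D a) y), <- meetA. tauto.
Qed.

Lemma mem_q2 y' x y : TS (q2 y') x y <-> fle (fmeet y (D (dl x))) y'.
Proof.
  split.
  - intros H. revert x y H. apply (cl_min (al:=D) (be:=D) (P:=fun a b => a = ftop /\ b = y') (Zclosed y')).
    intros a b [-> ->]. apply lm1.
  - intros H. apply (TS_down _ (fmeet (D (dl x)) ftop) y); [| rewrite meet_top; apply dl_unit | apply lrefl].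
    apply TS_sat. apply (TS_down _ ftop y'); [apply memg| apply lrefl|].
    rewrite meetC; auto.
Qed.

Lemma Lq_adj S z : fle (Lq S) z <-> fle S (q2 z).
Proof.
  split.
  - intros H x y Hxy. apply mem_q2. eapply ltrans; [|exact H]. apply lsup_ub; eauto.
  - intros H. apply lsup_lub. intros w [x [y [Hxy ->]]]. apply mem_q2, H, Hxy.
Qed.

Lemma madj w z : fle (left_adj M w) z <-> fle w (M z).
Proof.
  assert (E : forall w, left_adj M w = Lq (psi w)).
  { apply left_adj_eq. intros x y. rewrite Lq_adj. split.
    - intros H. rewrite <- (phi_psi x), <- phi_q2. apply (fh_mono hphi); auto.
    - intros H. rewrite <- (psi_phi (q2 y)). apply (fh_mono hpsi).
      rewrite phi_q2; auto. }
  rewrite E, Lq_adj. split.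
  - intros H. rewrite <- (phi_psi w), <- phi_q2. apply (fh_mono hphi); auto.
  - intros H. rewrite <- (psi_phi (q2 z)). apply (fh_mono hpsi). rewrite phi_q2; auto.
Qed.

Lemma m_unit w : fle w (M (left_adj M w)). Proof. apply madj, lrefl. Qed.
Lemma m_counit x : fle (left_adj M (M x)) x. Proof. apply madj, lrefl. Qed.
Lemma m_mono w w' : fle w w' -> fle (left_adj M w) (left_adj M w').
Proof. intros; apply madj; eapply ltrans; [eauto| apply m_unit]. Qed.
Lemma m_sup S : left_adj M (fsup S) = fsup (img (left_adj M) S).
Proof. apply la_sup; intros; apply madj. Qed.

Lemma m_frob w c : left_adj M (fmeet w (M c)) = fmeet (left_adj M w) c.
Proof.
  apply lanti.
  - apply lglb; [apply m_mono, lm1| apply madj, lm2].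
  - assert (E : forall w, left_adj M w = Lq (psi w)).
    { apply left_adj_eq. intros x y. rewrite Lq_adj. split.
      - intros H. rewrite <- (phi_psi x), <- phi_q2. apply (fh_mono hphi); auto.
      - intros H. rewrite <- (psi_phi (q2 y)). apply (fh_mono hpsi).
        rewrite phi_q2; auto. }
    rewrite !E, (fh_meet hpsi), <- phi_q2, psi_phi.
    eapply ltrans; [apply distr_r|]. apply lsup_lub. intros t [s [[x [y [Hxy ->]]] ->]].
    apply (ltrans _ (fmeet (fmeet y c) (D (dl x)))).
    + rewrite <- !meetA, (meetC (D (dl x)) c). apply lrefl.
    + apply lsup_ub. exists x, (fmeet y c); split; auto.
      apply TS_meet; split.
      * apply (TS_down _ x y); auto using lrefl, lm1.
      * apply mem_q2. rewrite <- meetA. apply meet_le_r, lm1.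
Qed.

End MO.

Section FIN.
Variable G : LGData.
Hypothesis HG : is_localic_groupoid G.
Hypothesis HDo : open_map (dst G).

Local Notation D := (dst G).
Local Notation R := (rst G).
Local Notation U := (ust G).
Local Notation I := (ist G).
Local Notation M := (mst G).
Local Notation P1 := (pi1 G).
Local Notation P2 := (pi2 G).
Local Notation mul := (OG_mul G).
Local Notation bs x y := (fmeet (P1 x) (P2 y)).
Local Notation ml := (left_adj M).

Lemma gP1 : frame_hom P1. Proof. exact (hP1 HG). Qed.
Lemma gP2 : frame_hom P2. Proof. exact (hP2 HG). Qed.
Lemma gD : frame_hom D. Proof. exact (hD HG). Qed.
Lemma gR : frame_hom R. Proof. exact (hR HG). Qed.
Lemma gM : frame_hom M. Proof. exact (hM HG). Qed.
Lemma gI : frame_hom I. Proof. exact (hI HG). Qed.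
Lemma gU : frame_hom U. Proof. exact (hU HG). Qed.
Lemma gP12 : comp G P1 P2. Proof. exact (P12 HG). Qed.
Lemma gpo : is_pushout R D P1 P2. Proof. exact (Hpo HG). Qed.

Lemma dec2 w : w = fsup (fun z => exists x y, fle (bs x y) w /\ z = bs x y).
Proof. exact (po_decomp gpo w). Qed.
Lemma ind2 (S : G1 G -> G1 G -> Prop) : gclosed R D S -> forall x y,
  fle (bs x y) (fsup (fun z => exists x' y', S x' y' /\ z = bs x' y')) -> S x y.
Proof. intros HS x y H. exact (po_induct gpo HS x y H). Qed.

Lemma madj' w z : fle (ml w) z <-> fle w (M z). Proof. apply madj; auto. Qed.
Lemma mfrob w c : ml (fmeet w (M c)) = fmeet (ml w) c. Proof. apply m_frob; auto. Qed.
Lemma munit w : fle w (M (ml w)). Proof. apply madj', lrefl. Qed.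
Lemma mcounit x : fle (ml (M x)) x. Proof. apply madj', lrefl. Qed.
Lemma mmono w w' : fle w w' -> fle (ml w) (ml w').
Proof. intros; apply madj'; eapply ltrans; [eauto| apply munit]. Qed.

Lemma mul_adj x y z : fle (mul x y) z <-> fle (bs x y) (M z).
Proof. unfold OG_mul; apply madj'. Qed.
Lemma bs_mono x y x' y' : fle x x' -> fle y y' -> fle (bs x y) (bs x' y').
Proof. intros; apply meet_mono; [apply (fh_mono gP1)|apply (fh_mono gP2)]; auto. Qed.
Lemma mul_mono x y x' y' : fle x x' -> fle y y' -> fle (mul x y) (mul x' y').
Proof. intros; unfold OG_mul; apply mmono, bs_mono; auto. Qed.
Lemma mul_ub x y : fle (bs x y) (M (mul x y)). Proof. apply munit. Qed.

Lemma mul_supl S y : mul (fsup S) y = fsup (img (fun x => mul x y) S).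
Proof.
  apply eq_by_ub; intro z. rewrite mul_adj. split.
  - intros H. apply lsup_lub. intros t [x [Hx ->]]. apply mul_adj.
    eapply ltrans; [|exact H]. apply bs_mono; [apply lsup_ub; auto| apply lrefl].
  - intros H. rewrite (fh_sup gP1). eapply ltrans; [apply distr_r|].
    apply lsup_lub. intros t [s [[x [Hx ->]] ->]]. apply mul_adj.
    eapply ltrans; [|exact H]. apply lsup_ub; exists x; auto.
Qed.
Lemma mul_supr x S : mul x (fsup S) = fsup (img (mul x) S).
Proof.
  apply eq_by_ub; intro z. rewrite mul_adj. split.
  - intros H. apply lsup_lub. intros t [y [Hy ->]]. apply mul_adj.
    eapply ltrans; [|exact H]. apply bs_mono; [apply lrefl|apply lsup_ub; auto].
  - intros H. rewrite (fh_sup gP2). eapply ltrans; [apply distr_l|].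
    apply lsup_lub. intros t [s [[y [Hy ->]] ->]]. apply mul_adj.
    eapply ltrans; [|exact H]. apply lsup_ub; exists y; auto.
Qed.

Lemma mul_actL a x y : mul (fmeet (D a) x) y = fmeet (D a) (mul x y).
Proof.
  unfold OG_mul. rewrite (meetC (D a) (ml _)), <- mfrob. f_equal.
  rewrite (fh_meet gP1), (mD HG). meet_ac.
Qed.
Lemma mul_mid a x y : mul (fmeet (R a) x) y = mul x (fmeet (D a) y).
Proof.
  unfold OG_mul. f_equal. rewrite (fh_meet gP1), (fh_meet gP2), gP12. meet_ac.
Qed.
Lemma mul_actR a x y : fmeet (R a) (mul x y) = mul x (fmeet (R a) y).
Proof.
  unfold OG_mul. rewrite (meetC (R a) (ml _)), <- mfrob. f_equal.
  rewrite (fh_meet gP2), (mR HG). meet_ac.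
Qed.

Lemma Sclosed e t : gclosed R D (fun p q => fle (bs p (mul q e)) t).
Proof.
  split; [|split; [|split]].
  - intros x y x' y' H Hx Hy. eapply ltrans; [|exact H]. apply bs_mono; auto.
    apply mul_mono; auto using lrefl.
  - intros X y H. rewrite (fh_sup gP1). eapply ltrans; [apply distr_r|].
    apply lsup_lub. intros z [s [[x [Hx ->]] ->]]. auto.
  - intros x Y H. rewrite mul_supl, (fh_sup gP2). eapply ltrans; [apply distr_l|].
    apply lsup_lub. intros z [s [[u [[y [Hy ->]] ->]] ->]]. auto.
  - intros x a y. rewrite mul_actL, (fh_meet gP1), (fh_meet gP2), <- gP12.
    replace (fmeet (fmeet (P1 (R a)) (P1 x)) (P2 (mul y e))) with (fmeet (P1 x) (fmeet (P1 (R a)) (P2 (mul y e)))) by meet_ac. tauto.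
Qed.

Lemma MONO p q a c e : fle (bs p q) (bs a c) -> fle (bs p (mul q e)) (bs a (mul c e)).
Proof.
  intros H. apply (ind2 _ (Sclosed e (bs a (mul c e)))).
  eapply ltrans; [exact H|]. apply lsup_ub. exists a, c; split; auto using lrefl.
Qed.


Lemma msup S : ml (fsup S) = fsup (img ml S). Proof. apply m_sup; auto. Qed.

Definition a3 : G0 G -> G2 G := fun a => P2 (R a).
Definition G3 := Tframe a3 D.
Definition r1 : G2 G -> G3 := j1 a3 D.
Definition r2 : G1 G -> G3 := j2 a3 D.
Lemma hr1 : frame_hom r1. Proof. apply j1_hom. Qed.
Lemma hr2 : frame_hom r2. Proof. apply j2_hom. Qed.
Definition g1 := fun x => r1 (P1 x).
Definition g2 := fun x => r1 (P2 x).
Lemma hg1 : frame_hom g1. Proof. apply (fh_comp gP1 hr1). Qed.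
Lemma hg2 : frame_hom g2. Proof. apply (fh_comp gP2 hr1). Qed.
Lemma cg12 : comp G g1 g2. Proof. intro x; unfold g1, g2; rewrite gP12; auto. Qed.
Lemma cg23 : comp G g2 r2. Proof. intro x; unfold g2; apply (j_compat a3 D). Qed.
Lemma pair_r1 : pair G g1 g2 = r1.
Proof. symmetry; apply (pair_uniq HG hg1 hg2 cg12 hr1); auto. Qed.
Lemma hm12 : frame_hom (mulp G g1 g2). Proof. apply (mulp_fh HG hg1 hg2 cg12). Qed.
Lemma hm23 : frame_hom (mulp G g2 r2). Proof. apply (mulp_fh HG hg2 hr2 cg23). Qed.
Lemma cK : comp G (mulp G g1 g2) r2. Proof. apply (comp_mul_l HG hg1 hg2 cg12 cg23). Qed.
Lemma cL : comp G g1 (mulp G g2 r2). Proof. apply (comp_mul_r HG hg2 hr2 cg12 cg23). Qed.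
Definition Kk := pair G (mulp G g1 g2) r2.
Definition Ll := pair G g1 (mulp G g2 r2).
Lemma hK : frame_hom Kk. Proof. apply (pair_fh HG hm12 hr2 cK). Qed.
Lemma hL : frame_hom Ll. Proof. apply (pair_fh HG hg1 hm23 cL). Qed.
Lemma KL c : Kk (M c) = Ll (M c).
Proof.
  pose proof (mul_assoc HG hg1 hg2 hr2 cg12 cg23) as E.
  exact (f_equal (fun f => f c) E).
Qed.
Lemma K1 x : Kk (P1 x) = r1 (M x).
Proof. unfold Kk; rewrite (pair_1 HG hm12 hr2 cK). unfold mulp; rewrite pair_r1; auto. Qed.
Lemma K2 y : Kk (P2 y) = r2 y.
Proof. unfold Kk; rewrite (pair_2 HG hm12 hr2 cK); auto. Qed.
Lemma L1 x : Ll (P1 x) = r1 (P1 x).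
Proof. unfold Ll; rewrite (pair_1 HG hg1 hm23 cL); auto. Qed.
Lemma L2 y : Ll (P2 y) = pair G g2 r2 (M y).
Proof. unfold Ll; rewrite (pair_2 HG hg1 hm23 cL); auto. Qed.
Lemma hPg : frame_hom (pair G g2 r2). Proof. apply (pair_fh HG hg2 hr2 cg23). Qed.
Lemma Pg_bs c e : pair G g2 r2 (bs c e) = fmeet (r1 (P2 c)) (r2 e).
Proof. rewrite (fh_meet hPg), (pair_1 HG hg2 hr2 cg23), (pair_2 HG hg2 hr2 cg23); auto. Qed.

Lemma G3_mem (S : G2 G -> G1 G -> Prop) (HS : gclosed a3 D S) w z :
  fle (fmeet (r1 w) (r2 z)) (exist _ S HS : G3) <-> S w z.
Proof. unfold r1, r2, G3 in *; rewrite <- gen_j. apply (gen_le w z (exist _ S HS : Tframe a3 D)). Qed.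

Lemma claimK w z v : fle (fmeet (r1 w) (r2 z)) (Kk v) <-> fle (bs (ml w) z) v.
Proof.
  split.
  - intros H.
    set (S := fun w' z' => fle (bs (ml w') z') v).
    assert (HS : gclosed a3 D S).
    { split; [|split; [|split]].
      - intros x y x' y' H1 Hx Hy. eapply ltrans; [|exact H1]. apply bs_mono; auto. apply mmono; auto.
      - intros X y H1. unfold S. rewrite msup, (fh_sup gP1). eapply ltrans; [apply distr_r|].
        apply lsup_lub. intros t [s [[u [[x [Hx ->]] ->]] ->]]. apply H1; auto.
      - intros x Y H1. unfold S. rewrite (fh_sup gP2). eapply ltrans; [apply distr_l|].
        apply lsup_lub. intros t [s [[y [Hy ->]] ->]]. apply H1; auto.
      - intros x a y. unfold S, a3. rewrite <- (mR HG), (meetC (M (R a))), mfrob.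
        rewrite (fh_meet gP1), (fh_meet gP2), <- gP12.
        replace (fmeet (fmeet (P1 (ml x)) (P1 (R a))) (P2 y)) with
                (fmeet (P1 (ml x)) (fmeet (P1 (R a)) (P2 y))) by meet_ac. tauto. }
    apply (G3_mem S HS). eapply ltrans; [exact H|].
    rewrite (dec2 v), (fh_sup hK). apply lsup_lub. intros t [s [[x' [y' [Hle ->]]] ->]].
    rewrite (fh_meet hK), K1, K2. apply G3_mem. unfold S.
    eapply ltrans; [|exact Hle]. apply bs_mono; [apply mcounit| apply lrefl].
  - intros H. eapply ltrans; [|apply (fh_mono hK); exact H].
    rewrite (fh_meet hK), K1, K2. apply meet_mono; [|apply lrefl].
    apply (fh_mono hr1), munit.
Qed.

Definition Psi (w : G2 G) (z : G1 G) : G2 G :=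
  fsup (fun t => exists x y, fle (bs x y) w /\ t = bs x (mul y z)).
Lemma Psi_le w z t : fle (Psi w z) t <-> forall x y, fle (bs x y) w -> fle (bs x (mul y z)) t.
Proof.
  split.
  - intros H x y Hxy. eapply ltrans; [|exact H]. apply lsup_ub; eauto.
  - intros H. apply lsup_lub. intros s [x [y [Hxy ->]]]. auto.
Qed.

Lemma claimL x y z v : fle (fmeet (r1 (bs x y)) (r2 z)) (Ll v) <-> fle (bs x (mul y z)) v.
Proof.
  split.
  - intros H.
    set (S := fun w' z' => fle (Psi w' z') v).
    assert (HS : gclosed a3 D S).
    { split; [|split; [|split]].
      - intros w z0 w' z' H1 Hw Hz. unfold S in *. rewrite Psi_le in *. intros p q Hpq.
        eapply ltrans; [|apply (H1 p q); eapply ltrans; [exact Hpq|exact Hw]].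
        apply bs_mono; [apply lrefl| apply mul_mono; auto using lrefl].
      - intros W z0 H1. unfold S in *. apply Psi_le. intros p q Hpq.
        apply (ind2 _ (Sclosed z0 v)). eapply ltrans; [exact Hpq|].
        apply lsup_lub. intros w Hw. rewrite (dec2 w). apply lsup_lub.
        intros t [p' [q' [Hle ->]]]. apply lsup_ub. exists p', q'; split; auto.
        pose proof (H1 w Hw) as H2. rewrite Psi_le in H2. apply H2; auto.
      - intros w Z H1. unfold S in *. apply Psi_le. intros p q Hpq.
        rewrite mul_supr, (fh_sup gP2). eapply ltrans; [apply distr_l|].
        apply lsup_lub. intros t [s [[u [[z0 [Hz0 ->]] ->]] ->]].
        pose proof (H1 z0 Hz0) as H2. rewrite Psi_le in H2. apply H2; auto.
      - intros w a z0. unfold S, a3.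
        assert (E : Psi w (fmeet (D a) z0) = Psi (fmeet (P2 (R a)) w) z0).
        { apply lanti.
          - apply Psi_le. intros p q Hpq. rewrite <- mul_mid.
            apply lsup_ub. exists p, (fmeet (R a) q); split; auto.
            rewrite (fh_meet gP2). apply lglb.
            + apply meet_le_r, lm1.
            + eapply ltrans; [|exact Hpq]. apply meet_mono; [apply lrefl|apply lm2].
          - apply Psi_le. intros p q Hpq.
            apply (ltrans _ (bs p (mul (fmeet (R a) q) z0))).
            + apply MONO. rewrite (fh_meet gP2). apply lglb; [apply lm1|apply lglb].
              * eapply ltrans; [exact Hpq| apply lm1].
              * apply lm2.
            + rewrite mul_mid. apply lsup_ub. exists p, q; split; auto.
              eapply ltrans; [exact Hpq| apply lm2]. }
        rewrite E; tauto. }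
    assert (HSx : S (bs x y) z).
    { apply (G3_mem S HS). eapply ltrans; [exact H|].
      rewrite (dec2 v), (fh_sup hL). apply lsup_lub. intros t [s [[a [b [Hab ->]]] ->]].
      rewrite (fh_meet hL), L1, L2, (dec2 (M b)), (fh_sup hPg).
      eapply ltrans; [apply distr_l|]. apply lsup_lub.
      intros t [s [[u [[c [e [Hce ->]]] ->]] ->]].
      rewrite Pg_bs, meetA, <- (fh_meet hr1). apply G3_mem. unfold S. apply Psi_le.
      intros p q Hpq. eapply ltrans; [apply (MONO _ _ _ _ _ Hpq)|].
      eapply ltrans; [|exact Hab]. apply bs_mono; [apply lrefl|].
      apply mul_adj; auto. }
    unfold S in HSx. rewrite Psi_le in HSx. apply HSx, lrefl.
  - intros H. eapply ltrans; [|apply (fh_mono hL); exact H].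
    rewrite (fh_meet hL), L1, L2.
    eapply ltrans; [|apply meet_mono; [apply lrefl| apply (fh_mono hPg), mul_ub]].
    rewrite Pg_bs, meetA, <- (fh_meet hr1). apply lrefl.
Qed.

Lemma mul_assoc_q x y z : mul (mul x y) z = mul x (mul y z).
Proof.
  apply eq_by_ub; intro c. rewrite !mul_adj.
  unfold OG_mul at 1. rewrite <- claimK, KL, claimL. tauto.
Qed.

Lemma ii x : I (I x) = x.
Proof. pose proof (inv_inv HG (fh_id (G1 G))) as E. exact (f_equal (fun f => f x) E). Qed.
Lemma I_adj x y : fle (I x) y <-> fle x (I y).
Proof.
  split; intros H.
  - rewrite <- (ii x). apply (fh_mono gI); auto.
  - rewrite <- (ii y). apply (fh_mono gI); auto.
Qed.

Lemma csg : comp G (fun x => P2 (I x)) (fun x => P1 (I x)).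
Proof. intro a; simpl. rewrite (iR HG), (iD HG); symmetry; apply gP12. Qed.
Lemma fPI2 : frame_hom (fun x => P2 (I x)). Proof. apply (fh_comp gI gP2). Qed.
Lemma fPI1 : frame_hom (fun x => P1 (I x)). Proof. apply (fh_comp gI gP1). Qed.
Definition sg := pair G (fun x => P2 (I x)) (fun x => P1 (I x)).
Lemma hsg : frame_hom sg. Proof. apply (pair_fh HG fPI2 fPI1 csg). Qed.
Lemma sg1 x : sg (P1 x) = P2 (I x). Proof. apply (pair_1 HG fPI2 fPI1 csg). Qed.
Lemma sg2 x : sg (P2 x) = P1 (I x). Proof. apply (pair_2 HG fPI2 fPI1 csg). Qed.
Lemma Mi c : M (I c) = sg (M c).
Proof.
  pose proof (inv_mul HG gP1 gP2 gP12) as E. pose proof (f_equal (fun f => f c) E) as E'.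
  simpl in E'. unfold inv in E'. rewrite (mulp_univ HG) in E'. exact E'.
Qed.
Lemma sgsg w : sg (sg w) = w.
Proof.
  assert (E : (fun w => sg (sg w)) = pair G P1 P2).
  { apply (pair_uniq HG gP1 gP2 gP12 (fh_comp hsg hsg)).
    - intros x; rewrite sg1, sg2, ii; auto.
    - intros x; rewrite sg2, sg1, ii; auto. }
  pose proof (f_equal (fun f => f w) E) as E'. simpl in E'. rewrite E', (pair_id HG); auto.
Qed.
Lemma sg_adj w w' : fle (sg w) w' <-> fle w (sg w').
Proof.
  split; intros H.
  - rewrite <- (sgsg w). apply (fh_mono hsg); auto.
  - rewrite <- (sgsg w'). apply (fh_mono hsg); auto.
Qed.
Lemma sg_bs x y : sg (bs x y) = bs (I y) (I x).
Proof. rewrite (fh_meet hsg), sg1, sg2, meetC; auto. Qed.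
Lemma I_ml w : I (ml w) = ml (sg w).
Proof.
  apply eq_by_ub; intro c. rewrite I_adj, !madj', Mi, sg_adj. tauto.
Qed.
Lemma inv_mul_q x y : I (mul x y) = mul (I y) (I x).
Proof. unfold OG_mul. rewrite I_ml, sg_bs; auto. Qed.

Lemma fDU : frame_hom (fun x => D (U x)). Proof. apply (fh_comp gU gD). Qed.
Definition Uh := pair G (fun x => D (U x)) (fun x : G1 G => x).
Lemma hUh : frame_hom Uh. Proof. apply (pair_fh HG fDU (fh_id _) (comp_univ_unit HG)). Qed.
Lemma Uh1 x : Uh (P1 x) = D (U x). Proof. apply (pair_1 HG fDU (fh_id _) (comp_univ_unit HG)). Qed.
Lemma Uh2 x : Uh (P2 x) = x. Proof. apply (pair_2 HG fDU (fh_id _) (comp_univ_unit HG)). Qed.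
Lemma Uh_M a : Uh (M a) = a. Proof. apply (ax_unitL HG); auto using hUh, Uh1, Uh2. Qed.
Lemma Uh_bs x y : Uh (bs x y) = fmeet (D (U x)) y. Proof. rewrite (fh_meet hUh), Uh1, Uh2; auto. Qed.

Lemma cIh : comp G (fun x : G1 G => x) I. Proof. intro a; simpl; rewrite (iD HG); auto. Qed.
Definition Ih := pair G (fun x : G1 G => x) I.
Lemma hIh : frame_hom Ih. Proof. apply (pair_fh HG (fh_id _) gI cIh). Qed.
Lemma Ih1 x : Ih (P1 x) = x. Proof. apply (pair_1 HG (fh_id _) gI cIh). Qed.
Lemma Ih2 x : Ih (P2 x) = I x. Proof. apply (pair_2 HG (fh_id _) gI cIh). Qed.
Lemma Ih_M a : Ih (M a) = D (U a). Proof. apply (ax_invL HG); auto using hIh, Ih1, Ih2. Qed.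
Lemma Ih_bs x y : Ih (bs x y) = fmeet x (I y). Proof. rewrite (fh_meet hIh), Ih1, Ih2; auto. Qed.

Lemma U1 e y : fle (fmeet (D (U e)) y) (mul e y).
Proof. rewrite <- Uh_bs. eapply ltrans; [apply (fh_mono hUh), mul_ub|]. rewrite Uh_M; apply lrefl. Qed.
Lemma U2 x : fle x (D (U (mul x (I x)))).
Proof. rewrite <- Ih_M. eapply ltrans; [| apply (fh_mono hIh), mul_ub]. rewrite Ih_bs, ii, meet_id; apply lrefl. Qed.

Lemma dadj x a : fle (left_adj D x) a <-> fle x (D a). Proof. apply HDo. Qed.
Lemma dfrob x a : left_adj D (fmeet x (D a)) = fmeet (left_adj D x) a. Proof. apply HDo. Qed.

Lemma Mz_closed z : gclosed R D (fun x y => fle (mul x y) z).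
Proof.
  split; [|split; [|split]].
  - intros x y x' y' H Hx Hy. eapply ltrans; [|exact H]. apply mul_mono; auto.
  - intros X y H. rewrite mul_supl. apply lsup_lub. intros t [x [Hx ->]]; auto.
  - intros x Y H. rewrite mul_supr. apply lsup_lub. intros t [y [Hy ->]]; auto.
  - intros x a y. rewrite mul_mid. tauto.
Qed.

Lemma RC z x y : muA_radj (G0 G) (G1 G) (OG_mul G) (OG_actL G) (OG_actR G) z x y <-> fle (mul x y) z.
Proof.
  unfold muA_radj, tjoin, muA. split.
  - intros H. apply (H (fun x y => fle (mul x y) z)); [exact (Mz_closed z)|].
    intros S [HS Hle] x' y' Hs. eapply ltrans; [|exact Hle]. apply lsup_ub; exists x', y'; auto.
  - intros Hxy T HT Hsub. apply (Hsub (fun x y => fle (mul x y) z)); auto. split.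
    + exact (Mz_closed z).
    + apply lsup_lub; intros t [x' [y' [H' ->]]]; auto.
Qed.

Lemma Lmult : is_multiplicative (G0 G) (G1 G) (OG_mul G) (OG_actL G) (OG_actR G).
Proof.
  unfold is_multiplicative. intros Z x y. split.
  - intro H. rewrite RC in H. unfold tjoin. intros T HT Hsub. apply (ind2 T HT).
    apply mul_adj in H. eapply ltrans; [exact H|]. rewrite (fh_sup gM). apply lsup_lub.
    intros t [z [Hz ->]]. rewrite (dec2 (M z)). apply lsup_lub. intros t [p [q [Hpq ->]]].
    apply lsup_ub. exists p, q; split; auto.
    apply (Hsub (muA_radj (G0 G) (G1 G) (OG_mul G) (OG_actL G) (OG_actR G) z)); [exists z; auto|].
    apply RC. apply mul_adj; auto.
  - intro H. apply RC. apply (H (fun x y => fle (mul x y) (fsup Z))); [exact (Mz_closed _)|].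
    intros S [z [Hz ->]] x' y' Hs. apply RC in Hs. eapply ltrans; [exact Hs| apply lsup_ub; auto].
Qed.

Lemma Lsupp : is_equivariant_support (G0 G) (G1 G) (OG_mul G) (OG_inv G) (OG_actL G) (OG_supp G).
Proof.
  unfold is_equivariant_support, is_support, OG_supp, OG_actL, OG_inv.
  split; [split; [|split; [|split]]|].
  - intros S. apply la_sup. apply dadj.
  - apply top_le. assert (H : D (left_adj D ftop) = ftop) by (apply top_le, (la_unit _ _ _ dadj)).
    rewrite <- (uD HG (left_adj D ftop)), H, (fh_top gU). apply lrefl.
  - intros x y. eapply ltrans; [|apply U1]. apply meet_mono; [|apply lrefl].
    apply (fh_mono gD). apply dadj, U2.
  - intros x. rewrite meetC. apply meet_le. apply (la_unit _ _ _ dadj).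
  - intros a x. rewrite meetC, dfrob, meetC; auto.
Qed.

Lemma Lrefl : is_reflexive (G0 G) (G1 G) (OG_actL G) (OG_actR G) (OG_ups G).
Proof.
  unfold is_reflexive, OG_ups, OG_actL, OG_actR. split; [exact gU|].
  intros a; rewrite !meet_top, (uD HG), (uR HG); auto.
Qed.

Lemma Lbqf : is_based_quantal_frame (G0 G) (G1 G) (OG_mul G) (OG_inv G) (OG_actL G) (OG_actR G).
Proof.
  unfold is_based_quantal_frame, is_AA_quantale, is_bimodule, is_involutive, OG_actL, OG_actR, OG_inv.
  split; [split; [split; [|split; [|split; [|split; [|split; [|split; [|split; [|split]]]]]]]|] |].
  - intros a S. apply fdistr.
  - intros S q. rewrite (fh_sup gD), meet_sup_r, img_comp; auto.
  - intros q S. rewrite (fh_sup gR), meet_sup_r, img_comp; auto.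
  - intros S a. apply fdistr.
  - intros m. rewrite (fh_top gD), top_meet; auto.
  - intros a b m. rewrite (fh_meet gD), meetA; auto.
  - intros m. rewrite (fh_top gR), top_meet; auto.
  - intros a b m. rewrite (fh_meet gR). meet_ac.
  - intros a b m. meet_ac.
  - split; [|split; [|split; [|split; [|split]]]].
    + apply mul_assoc_q.
    + apply mul_supl.
    + apply mul_supr.
    + apply mul_actL.
    + apply mul_mid.
    + apply mul_actR.
  - split; [split; [|split; [|split]]|split].
    + apply (fh_sup gI).
    + apply ii.
    + apply inv_mul_q.
    + intros a b x. rewrite !(fh_meet gI), (iD HG), (iR HG). meet_ac.
    + intros a x y; meet_ac.
    + intros a x y; meet_ac.
Qed.

Lemma Lunit : unit_laws (G0 G) (G1 G) (OG_mul G) (OG_actL G) (OG_ups G).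
Proof.
  unfold unit_laws, OG_ups, OG_actL. intros a. apply lanti.
  - apply lsup_lub. intros t [x [y [Hle ->]]]. eapply ltrans; [apply U1|exact Hle].
  - apply (ltrans _ (Uh (M a))); [rewrite Uh_M; apply lrefl|].
    rewrite (dec2 (M a)), (fh_sup hUh). apply lsup_lub.
    intros t [s [[p [q [Hpq ->]]] ->]]. rewrite Uh_bs. apply lsup_ub.
    exists p, q; split; auto. apply mul_adj; auto.
Qed.

Lemma Linv : inverse_law (G0 G) (G1 G) (OG_mul G) (OG_inv G) (OG_actL G) (OG_ups G).
Proof.
  unfold inverse_law, OG_ups, OG_actL, OG_inv. intros a. rewrite meet_top. apply lanti.
  - rewrite <- (Ih_M a), (dec2 (M a)), (fh_sup hIh). apply lsup_lub.
    intros t [s [[p [q [Hpq ->]]] ->]]. rewrite Ih_bs. apply lsup_ub.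
    exists p, (I q); split; auto. rewrite ii. apply mul_adj; auto.
  - apply lsup_lub. intros t [x [y [Hle ->]]]. rewrite <- (Ih_M a).
    apply mul_adj in Hle. eapply ltrans; [|apply (fh_mono hIh); exact Hle].
    rewrite Ih_bs, ii; apply lrefl.
Qed.
End FIN.

Theorem theorem5p13 (G : LGData) :
  open_groupoid G ->
  is_groupoid_quantale (G0 G) (G1 G) (OG_mul G) (OG_inv G)
    (OG_actL G) (OG_actR G) (OG_supp G) (OG_ups G).
Proof.
  intros [HG HDo]. unfold is_groupoid_quantale.
  split; [apply Lmult; auto|].
  split; [apply Lsupp; auto|].
  split; [apply Lrefl; auto|].
  split; [apply Lbqf; auto|].
  split; [apply Lunit; auto| apply Linv; auto].
Qed.
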